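(* Let $f\colon E\to\mathbb{R}$ be smooth and let $Z$ be the vector field along $E$ with components $Z^\mu=g^{\mu\nu}\partial f/\partial y^\nu$. Then \[ \nabla^{HC}\cdot Z=g^{\mu\nu}\Big(\frac{\delta}{\delta x^\mu}\frac{\partial f}{\partial y^\nu}-\Gamma^\alpha_{\nu\mu}\frac{\partial f}{\partial y^\alpha}\Big)=\frac{\partial}{\partial y^\nu}\Big(g^{\nu\mu}\frac{\delta f}{\delta x^\mu}\Big)+2I^\mu\frac{\delta f}{\delta x^\mu}+J^\alpha\frac{\partial f}{\partial y^\alpha}, \] where $I^\mu=g^{\mu\nu}I_\nu$ and $J^\alpha=g^{\alpha\beta}J_\beta$.
   Context: $M$ smooth $n$-manifold, $E=TM\setminus0$, induced coordinates $\{x^\mu,y^\mu\}$. $\mathscr{L}\colon E\to\mathbb{R}$ smooth, positively homogeneous of degree two in $y$, with non-degenerate $g_{\mu\nu}=\partial^2\mathscr{L}/\partial y^\mu\partial y^\nu$, inverse $g^{\mu\nu}$. $C_{\alpha\beta\gamma}=\tfrac12\partial g_{\beta\gamma}/\partial y^\alpha$, $I_\gamma=g^{\alpha\beta}C_{\alpha\beta\gamma}$. Spray $2G^\alpha=g^{\alpha\delta}\big(\frac{\partial^2\mathscr{L}}{\partial x^\gamma\partial y^\delta}y^\gamma-\frac{\partial\mathscr{L}}{\partial x^\delta}\big)$, $N^\alpha_\mu=G^\alpha_\mu=\partial G^\alpha/\partial y^\mu$, Berwald coefficients $G^\alpha_{\mu\nu}=\partial G^\alpha_\mu/\partial y^\nu$,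 $\frac{\delta}{\delta x^\mu}=\frac{\partial}{\partial x^\mu}-N^\nu_\mu\frac{\partial}{\partial y^\nu}$, $\Gamma^\alpha_{\beta\gamma}=\tfrac12 g^{\alpha\sigma}\big(\frac{\delta g_{\sigma\gamma}}{\delta x^\beta}+\frac{\delta g_{\sigma\beta}}{\delta x^\gamma}-\frac{\delta g_{\beta\gamma}}{\delta x^\sigma}\big)$. Landsberg tensor $L^\alpha_{\beta\gamma}=G^\alpha_{\beta\gamma}-\Gamma^\alpha_{\beta\gamma}$, and $J_\alpha=L^\mu_{\alpha\mu}$. $(\nabla^{HC}_\alpha Z)^\beta=\frac{\delta Z^\beta}{\delta x^\alpha}+\Gamma^\beta_{\mu\alpha}Z^\mu$, $\nabla^{HC}\cdot Z=(\nabla^{HC}_\alpha Z)^\alpha$. *)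

(* Defs.v *)
From mathcomp Require Import ssreflect ssrfun ssrbool eqtype ssrnat seq fintype.
From Stdlib Require Import Reals ClassicalEpsilon.
Set Implicit Arguments.
Unset Strict Implicit.
Local Open Scope R_scope.

(* Local coordinates (x^mu, y^mu) on E = TM \ 0 over a chart domain U of M:
   a point of E is a pair (x, y) of coordinate vectors 'I_n -> R.
   A function on E is  F : ('I_n -> R) -> ('I_n -> R) -> R. *)
Definition Fn (n : nat) := ('I_n -> R) -> ('I_n -> R) -> R.

Definition sumI (n : nat) (F : 'I_n -> R) : R := foldr Rplus 0 (map F (enum 'I_n)).

Definition upd (n : nat) (v : 'I_n -> R) (mu : 'I_n) (t : R) : 'I_n -> R :=
  fun i => if i == mu then v i + t else v i.

(* partial derivative value (chosen by epsilon; meaningful where it exists) *)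
Definition deriv_at (h : R -> R) : R :=
  epsilon (inhabits 0) (fun l => derivable_pt_lim h 0 l).

Definition Dx (n : nat) (mu : 'I_n) (F : Fn n) : Fn n :=
  fun x y => deriv_at (fun t => F (upd x mu t) y).
Definition Dy (n : nat) (mu : 'I_n) (F : Fn n) : Fn n :=
  fun x y => deriv_at (fun t => F x (upd y mu t)).

Fixpoint iterD (n : nat) (ds : seq (bool * 'I_n)) (F : Fn n) : Fn n :=
  match ds with
  | [::] => F
  | (b, mu) :: ds' => (if b then Dy mu else Dx mu) (iterD ds' F)
  end.

Definition onE (n : nat) (U : ('I_n -> R) -> Prop) (x y : 'I_n -> R) : Prop :=
  U x /\ exists i, y i <> 0.

Definition chart_open (n : nat) (U : ('I_n -> R) -> Prop) : Prop :=
  forall x, U x -> exists d, 0 < d /\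
    forall x', (forall i, Rabs (x' i - x i) < d) -> U x'.

Definition cont_at (n : nat) (U : ('I_n -> R) -> Prop) (F : Fn n) x y : Prop :=
  forall eps, 0 < eps -> exists d, 0 < d /\
    forall x' y', onE U x' y' ->
      (forall i, Rabs (x' i - x i) < d /\ Rabs (y' i - y i) < d) ->
      Rabs (F x' y' - F x y) < eps.

Definition smooth_on (n : nat) (U : ('I_n -> R) -> Prop) (F : Fn n) : Prop :=
  forall ds : seq (bool * 'I_n), forall x y, onE U x y ->
    cont_at U (iterD ds F) x y /\
    forall mu : 'I_n,
      (exists l, derivable_pt_lim (fun t => iterD ds F (upd x mu t) y) 0 l) /\
      (exists l, derivable_pt_lim (fun t => iterD ds F x (upd y mu t)) 0 l).

Definition pos_homog2 (n : nat) (U : ('I_n -> R) -> Prop) (L : Fn n) : Prop :=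
  forall x y lam, onE U x y -> 0 < lam ->
    L x (fun i => lam * y i) = lam ^ 2 * L x y.

Definition kdelta (n : nat) (i j : 'I_n) : R := if i == j then 1 else 0.

Section Finsler.
Variables (n : nat) (L : Fn n) (ginv : 'I_n -> 'I_n -> Fn n).

Definition gmet (mu nu : 'I_n) : Fn n := Dy mu (Dy nu L).

Definition Cartan (a b c : 'I_n) : Fn n := fun x y => / 2 * Dy a (gmet b c) x y.

Definition Ilow (c : 'I_n) : Fn n :=
  fun x y => sumI (fun a => sumI (fun b => ginv a b x y * Cartan a b c x y)).

Definition spray (a : 'I_n) : Fn n :=
  fun x y => / 2 * sumI (fun d => ginv a d x y *
     (sumI (fun c => Dx c (Dy d L) x y * y c) - Dx d L x y)).

Definition Nconn (a mu : 'I_n) : Fn n := Dy mu (spray a).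

Definition Berwald (a mu nu : 'I_n) : Fn n := Dy nu (Nconn a mu).

Definition Ddelta (mu : 'I_n) (F : Fn n) : Fn n :=
  fun x y => Dx mu F x y - sumI (fun nu => Nconn nu mu x y * Dy nu F x y).

Definition Chern (a b c : 'I_n) : Fn n :=
  fun x y => / 2 * sumI (fun s => ginv a s x y *
    (Ddelta b (gmet s c) x y + Ddelta c (gmet s b) x y - Ddelta s (gmet b c) x y)).

Definition Landsberg (a b c : 'I_n) : Fn n :=
  fun x y => Berwald a b c x y - Chern a b c x y.

Definition Jlow (a : 'I_n) : Fn n := fun x y => sumI (fun mu => Landsberg mu a mu x y).

Definition Iup (mu : 'I_n) : Fn n := fun x y => sumI (fun nu => ginv mu nu x y * Ilow nu x y).
Definition Jup (a : 'I_n) : Fn n := fun x y => sumI (fun b => ginv a b x y * Jlow b x y).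

Definition divHC (Z : 'I_n -> Fn n) : Fn n :=
  fun x y => sumI (fun a => Ddelta a (Z a) x y + sumI (fun mu => Chern a mu a x y * Z mu x y)).

Definition gradV (f : Fn n) (mu : 'I_n) : Fn n :=
  fun x y => sumI (fun nu => ginv mu nu x y * Dy nu f x y).

End Finsler.

(* Main.v *)
Require Import Defs.
From mathcomp Require Import ssreflect ssrfun ssrbool eqtype ssrnat seq fintype.
From Stdlib Require Import Reals.
From Stdlib Require Import Lra ClassicalEpsilon FunctionalExtensionality PropExtensionality.
From Coquelicot Require Hierarchy Derive Derive_2d.
Import Defs.
Set Implicit Arguments.
Unset Strict Implicit.
Local Open Scope R_scope.

Definition sumL (T : Type) (s : seq T) (F : T -> R) : R := foldr Rplus 0 (map F s).

Lemma sumL_ext T (s : seq T) F G : (forall i, F i = G i) -> sumL s F = sumL s G.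
Proof. move=> H; elim: s => //= a s IH; rewrite /sumL /= -/(sumL s F) -/(sumL s G) IH H //. Qed.

Lemma sumL_cons T (a : T) s F : sumL (a :: s) F = F a + sumL s F.
Proof. by []. Qed.

Lemma sumL_plus T (s : seq T) F G : sumL s (fun i => F i + G i) = sumL s F + sumL s G.
Proof. elim: s => [|a s IH]; rewrite ?sumL_cons /=; [rewrite /sumL /=; lra|rewrite IH; lra]. Qed.

Lemma sumL_minus T (s : seq T) F G : sumL s (fun i => F i - G i) = sumL s F - sumL s G.
Proof. elim: s => [|a s IH]; rewrite ?sumL_cons /=; [rewrite /sumL /=; lra|rewrite IH; lra]. Qed.

Lemma sumL_scal_l T (s : seq T) c F : sumL s (fun i => c * F i) = c * sumL s F.
Proof. elim: s => [|a s IH]; rewrite ?sumL_cons /=; [rewrite /sumL /=; lra|rewrite IH; lra]. Qed.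

Lemma sumL_scal_r T (s : seq T) c F : sumL s (fun i => F i * c) = sumL s F * c.
Proof. elim: s => [|a s IH]; rewrite ?sumL_cons /=; [rewrite /sumL /=; lra|rewrite IH; lra]. Qed.

Lemma sumL_0 T (s : seq T) : sumL s (fun _ => 0) = 0.
Proof. elim: s => [|a s IH]; rewrite ?sumL_cons /=; [rewrite /sumL /=; lra|rewrite IH; lra]. Qed.

Lemma sumL_swap T1 T2 (s : seq T1) (t : seq T2) F :
  sumL s (fun i => sumL t (fun j => F i j)) = sumL t (fun j => sumL s (fun i => F i j)).
Proof.
elim: s => [|a s IH]; rewrite ?sumL_cons.
  by rewrite /sumL /= -/(sumL t (fun _ => 0)) sumL_0.
rewrite IH -sumL_plus; apply: sumL_ext => j; by rewrite sumL_cons.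
Qed.



Lemma sumL_ext_in (T : eqType) (s : seq T) F G :
  (forall i, i \in s -> F i = G i) -> sumL s F = sumL s G.
Proof.
elim: s => [|a s IH] H //=; rewrite !sumL_cons H ?mem_head // IH // => i Hi.
by apply: H; rewrite in_cons Hi orbT.
Qed.

Lemma sumL_delta (T : eqType) (s : seq T) (i : T) F :
  uniq s -> i \in s -> sumL s (fun j => if i == j then F j else 0) = F i.
Proof.
elim: s => [|a s IH] //= /andP [Ha Hu].
rewrite in_cons sumL_cons => /orP [/eqP ->|Hi].
  rewrite eqxx.
  have -> : sumL s (fun j => if a == j then F j else 0) = 0.
    rewrite (@sumL_ext_in _ _ _ (fun _ => 0)) ?sumL_0 // => j Hj.
    case E: (a == j) => //. move/eqP: E => E; rewrite -E in Hj; by rewrite Hj in Ha.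
  lra.
rewrite IH //.
case E: (i == a) => //. move/eqP: E => E; rewrite E in Hi; by rewrite Hi in Ha.
lra.
Qed.

Section SumI.
Variable n : nat.
Implicit Types F G : 'I_n -> R.

Lemma sumI_ext F G : (forall i, F i = G i) -> sumI F = sumI G.
Proof. exact: sumL_ext. Qed.
Lemma sumI_plus F G : sumI (fun i => F i + G i) = sumI F + sumI G.
Proof. exact: sumL_plus. Qed.
Lemma sumI_minus F G : sumI (fun i => F i - G i) = sumI F - sumI G.
Proof. exact: sumL_minus. Qed.
Lemma sumI_scal_l c F : sumI (fun i => c * F i) = c * sumI F.
Proof. exact: sumL_scal_l. Qed.
Lemma sumI_scal_r c F : sumI (fun i => F i * c) = sumI F * c.
Proof. exact: sumL_scal_r. Qed.
Lemma sumI_opp F : sumI (fun i => - F i) = - sumI F.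
Proof.
rewrite /sumI; elim: (enum 'I_n) => [|a s IH] /=; [lra|rewrite IH; lra].
Qed.
Lemma sumI_0 : sumI (fun _ : 'I_n => 0) = 0.
Proof. exact: sumL_0. Qed.
Lemma sumI_swap (F : 'I_n -> 'I_n -> R) :
  sumI (fun i => sumI (fun j => F i j)) = sumI (fun j => sumI (fun i => F i j)).
Proof. exact: sumL_swap. Qed.
Lemma sumI_kd_l i F : sumI (fun j => kdelta i j * F j) = F i.
Proof.
rewrite -(@sumL_delta _ (enum 'I_n) i F) ?enum_uniq ?mem_enum //.
apply: sumL_ext => j; rewrite /kdelta; case: (i == j); lra.
Qed.
Lemma kdelta_sym (i j : 'I_n) : kdelta i j = kdelta j i.
Proof. by rewrite /kdelta eq_sym. Qed.
Lemma sumI_kd_r i F : sumI (fun j => F j * kdelta j i) = F i.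
Proof. rewrite -(sumI_kd_l i F); apply: sumI_ext => j; rewrite kdelta_sym; lra. Qed.
Lemma sumI_kd_l' i F : sumI (fun j => kdelta j i * F j) = F i.
Proof. rewrite -(sumI_kd_l i F); apply: sumI_ext => j; rewrite kdelta_sym; lra. Qed.
Lemma sumI_kd_r' i F : sumI (fun j => F j * kdelta i j) = F i.
Proof. rewrite -(sumI_kd_l i F); apply: sumI_ext => j; lra. Qed.
End SumI.

Lemma deriv_at_eq h l : derivable_pt_lim h 0 l -> deriv_at h = l.
Proof.
move=> H; rewrite /deriv_at.
apply: (uniqueness_limite _ _ _ _ _ H).
exact: (epsilon_spec (inhabits 0) (fun l => derivable_pt_lim h 0 l) (ex_intro _ l H)).
Qed.

Lemma dpl_loc f g x l d : 0 < d -> (forall t, Rabs (t - x) < d -> f t = g t) ->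
  derivable_pt_lim f x l -> derivable_pt_lim g x l.
Proof.
move=> Hd Heq H eps He; have [del Hdel] := H eps He.
have Hm : 0 < Rmin del d by apply: Rmin_pos => //; apply: cond_pos.
exists (mkposreal _ Hm) => h hn /= hl.
have E1 : f (x + h) = g (x + h).
  apply: Heq; replace (x + h - x) with h by ring.
  apply: (Rlt_le_trans _ _ _ hl); apply: Rmin_r.
have E2 : f x = g x by apply: Heq; replace (x - x) with 0 by ring; rewrite Rabs_R0.
rewrite -E1 -E2; apply: Hdel => //; apply: (Rlt_le_trans _ _ _ hl); apply: Rmin_l.
Qed.

Lemma dpl_shift f x l : derivable_pt_lim (fun s => f (x + s)) 0 l -> derivable_pt_lim f x l.
Proof.
move=> H eps He; have [del Hdel] := H eps He; exists del => h hn hl.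
have := Hdel h hn hl; by rewrite Rplus_0_l Rplus_0_r.
Qed.

Lemma dpl_unshift f x l : derivable_pt_lim f x l -> derivable_pt_lim (fun s => f (x + s)) 0 l.
Proof.
move=> H eps He; have [del Hdel] := H eps He; exists del => h hn hl.
rewrite Rplus_0_l Rplus_0_r; exact: Hdel.
Qed.

Lemma dpl_scale f c l : derivable_pt_lim f 0 l -> derivable_pt_lim (fun t => f (c * t)) 0 (c * l).
Proof.
move=> H.
have H1 : derivable_pt_lim (fun t => c * t) 0 c.
  have := derivable_pt_lim_scal id c 0 1 (derivable_pt_lim_id 0).
  rewrite Rmult_1_r => H2; exact: H2.
have H2 : derivable_pt_lim f ((fun t => c * t) 0) l by rewrite Rmult_0_r.
have := derivable_pt_lim_comp _ _ _ _ _ H1 H2; rewrite Rmult_comm; exact.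
Qed.

Lemma dpl_const c x : derivable_pt_lim (fun _ => c) x 0.
Proof. exact: derivable_pt_lim_const. Qed.

Lemma dpl_mult f g x l1 l2 : derivable_pt_lim f x l1 -> derivable_pt_lim g x l2 ->
  derivable_pt_lim (fun t => f t * g t) x (l1 * g x + f x * l2).
Proof. exact: derivable_pt_lim_mult. Qed.
Lemma dpl_plus f g x l1 l2 : derivable_pt_lim f x l1 -> derivable_pt_lim g x l2 ->
  derivable_pt_lim (fun t => f t + g t) x (l1 + l2).
Proof. exact: derivable_pt_lim_plus. Qed.
Lemma dpl_minus f g x l1 l2 : derivable_pt_lim f x l1 -> derivable_pt_lim g x l2 ->
  derivable_pt_lim (fun t => f t - g t) x (l1 - l2).
Proof. exact: derivable_pt_lim_minus. Qed.
Lemma dpl_sumL T (s : seq T) (f : T -> R -> R) (l : T -> R) x :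
  (forall i, derivable_pt_lim (f i) x (l i)) ->
  derivable_pt_lim (fun t => sumL s (fun i => f i t)) x (sumL s l).
Proof.
move=> H; elim: s => [|a s IH].
  exact: dpl_const.
exact: dpl_plus (H a) IH.
Qed.
Lemma dpl_sumL_in (T : eqType) (s : seq T) (f : T -> R -> R) (l : T -> R) x :
  (forall i, i \in s -> derivable_pt_lim (f i) x (l i)) ->
  derivable_pt_lim (fun t => sumL s (fun i => f i t)) x (sumL s l).
Proof.
elim: s => [|a s IH] H.
  exact: dpl_const.
apply: dpl_plus; first by apply: H; rewrite mem_head.
apply: IH => i Hi; apply: H; by rewrite in_cons Hi orbT.
Qed.

Lemma dpl_eqv f x l l' : derivable_pt_lim f x l -> l = l' -> derivable_pt_lim f x l'.
Proof. by move=> H <-. Qed.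

Section Multi.
Variable n : nat.
Variable U : ('I_n -> R) -> Prop.
Hypothesis HU : chart_open U.

Definition Dd (d : bool * 'I_n) (F : Fn n) : Fn n := if d.1 then Dy d.2 F else Dx d.2 F.
Definition sh (d : bool * 'I_n) (t : R) (x y : 'I_n -> R) : ('I_n -> R) * ('I_n -> R) :=
  if d.1 then (x, upd y d.2 t) else (upd x d.2 t, y).
Definition ev (F : Fn n) (p : ('I_n -> R) * ('I_n -> R)) : R := F p.1 p.2.

Lemma Dd_def d F x y : Dd d F x y = deriv_at (fun t => ev F (sh d t x y)).
Proof. by case: d => [[] mu]. Qed.
Lemma iterD_cons d ds F : iterD (d :: ds) F = Dd d (iterD ds F).
Proof. by case: d => [[] mu]. Qed.
Lemma iterD_app ds d F : iterD (ds ++ [:: d]) F = iterD ds (Dd d F).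
Proof. elim: ds => [|e ds IH]; first by rewrite cat0s iterD_cons. by rewrite cat_cons !iterD_cons IH. Qed.

Lemma upd0 (v : 'I_n -> R) mu : upd v mu 0 = v.
Proof. apply: functional_extensionality => i; rewrite /upd; case: ifP => _; lra. Qed.
Lemma sh0 d x y : sh d 0 x y = (x, y).
Proof. by rewrite /sh; case: ifP => _; rewrite upd0. Qed.
Lemma upd_upd (v : 'I_n -> R) mu a b : upd (upd v mu a) mu b = upd v mu (a + b).
Proof. apply: functional_extensionality => i; rewrite /upd; case: (i == mu); lra. Qed.
Lemma upd_comm (v : 'I_n -> R) mu nu a b : mu != nu ->
  upd (upd v mu a) nu b = upd (upd v nu b) mu a.
Proof.
move=> H; apply: functional_extensionality => i; rewrite /upd.
case E1: (i == mu); case E2: (i == nu); try lra;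
move/eqP: E1 => E1; move/eqP: E2 => E2; by rewrite -E1 -E2 eqxx in H.
Qed.
Lemma sh_sh d x y a b : sh d b (sh d a x y).1 (sh d a x y).2 = sh d (a + b) x y.
Proof. by case: d => [[] mu]; rewrite /sh /= upd_upd. Qed.
Lemma sh_comm d e x y a b : d != e ->
  sh d a (sh e b x y).1 (sh e b x y).2 = sh e b (sh d a x y).1 (sh d a x y).2.
Proof.
case: d => [[] mu]; case: e => [[] nu] H; rewrite /sh /= //.
- rewrite upd_comm //; apply: contra H => /eqP ->; by [].
- rewrite upd_comm //; apply: contra H => /eqP ->; by [].
Qed.

Definition close (del : R) (x y x' y' : 'I_n -> R) :=
  forall i, Rabs (x' i - x i) < del /\ Rabs (y' i - y i) < del.

Lemma onE_open x y : onE U x y ->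
  exists del, 0 < del /\ forall x' y', close del x y x' y' -> onE U x' y'.
Proof.
move=> [Ux [i0 Hi0]]; have [d1 [Hd1 H1]] := HU Ux.
have Hy : 0 < Rabs (y i0) by apply: Rabs_pos_lt.
exists (Rmin d1 (Rabs (y i0))); split; first by apply: Rmin_pos.
move=> x' y' Hc; split.
  apply: H1 => i; have [h _] := Hc i; apply: (Rlt_le_trans _ _ _ h); apply: Rmin_l.
exists i0 => E; have [_ h] := Hc i0; rewrite E in h.
have : Rabs (0 - y i0) < Rabs (y i0) by apply: (Rlt_le_trans _ _ _ h); apply: Rmin_r.
rewrite Rminus_0_l Rabs_Ropp; lra.
Qed.

Lemma upd_dist (v : 'I_n -> R) mu t i : Rabs (upd v mu t i - v i) <= Rabs t.
Proof.
rewrite /upd; case: ifP => _.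
  by replace (v i + t - v i) with t by ring; lra.
rewrite Rminus_diag Rabs_R0; apply: Rabs_pos.
Qed.

Lemma close_sh del d t x y : 0 < del -> Rabs t < del ->
  close del x y (sh d t x y).1 (sh d t x y).2.
Proof.
move=> Hd Ht i; case: d => [[] mu] /=; rewrite ?Rminus_diag ?Rabs_R0; split => //;
  exact: (Rle_lt_trans _ _ _ (upd_dist _ _ _ _) Ht).
Qed.

Lemma close_trans d1 d2 x y x1 y1 x2 y2 : close d1 x y x1 y1 -> close d2 x1 y1 x2 y2 ->
  close (d1 + d2) x y x2 y2.
Proof.
move=> H1 H2 i; have [a b] := H1 i; have [c e] := H2 i.
split.
  replace (x2 i - x i) with ((x2 i - x1 i) + (x1 i - x i)) by ring.
  apply: (Rle_lt_trans _ _ _ (Rabs_triang _ _)); lra.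
replace (y2 i - y i) with ((y2 i - y1 i) + (y1 i - y i)) by ring.
apply: (Rle_lt_trans _ _ _ (Rabs_triang _ _)); lra.
Qed.

Lemma close_mono d1 d2 x y x' y' : d1 <= d2 -> close d1 x y x' y' -> close d2 x y x' y'.
Proof. move=> H Hc i; have [a b] := Hc i; split; lra. Qed.

Lemma close_refl d x y : 0 < d -> close d x y x y.
Proof. move=> H i; rewrite !Rminus_diag Rabs_R0; split; lra. Qed.

Lemma onE_sh x y d : onE U x y ->
  exists del, 0 < del /\ forall t, Rabs t < del -> onE U (sh d t x y).1 (sh d t x y).2.
Proof.
move=> hE; have [del [Hd H]] := onE_open hE; exists del; split => // t Ht.
apply: H; exact: close_sh.
Qed.

Lemma deriv_at_loc (h1 h2 : R -> R) del : 0 < del ->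
  (forall t, Rabs t < del -> h1 t = h2 t) -> deriv_at h1 = deriv_at h2.
Proof.
move=> Hd H; rewrite /deriv_at; f_equal.
apply: functional_extensionality => l; apply: propositional_extensionality.
split; apply: dpl_loc Hd _ => t; rewrite Rminus_0_r => /H //.
Qed.

Lemma Dd_loc (F G : Fn n) d x y : onE U x y ->
  (forall x' y', onE U x' y' -> F x' y' = G x' y') -> Dd d F x y = Dd d G x y.
Proof.
move=> hE H; rewrite !Dd_def; have [del [Hd Hs]] := onE_sh d hE.
apply: (deriv_at_loc Hd) => t Ht; rewrite /ev; apply: H; exact: Hs.
Qed.

Lemma iterD_loc ds (F G : Fn n) : (forall x' y', onE U x' y' -> F x' y' = G x' y') ->
  forall x y, onE U x y -> iterD ds F x y = iterD ds G x y.
Proof.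
move=> H; elim: ds => [|d ds IH] x y hE; first exact: H.
rewrite !iterD_cons; apply: Dd_loc => //.
Qed.

Definition Sm (F : Fn n) := smooth_on U F.

Lemma Sm_cont F x y : Sm F -> onE U x y -> cont_at U F x y.
Proof. by move=> HF hE; have [H _] := HF [::] x y hE. Qed.

Lemma Sm_dpl F d x y : Sm F -> onE U x y ->
  derivable_pt_lim (fun t => ev F (sh d t x y)) 0 (Dd d F x y).
Proof.
move=> HF hE; have [_ H] := HF [::] x y hE.
case: d => [[] mu]; have [[l1 Hl1] [l2 Hl2]] := H mu; rewrite /ev /Dd /sh /=.
  rewrite /Dy (deriv_at_eq Hl2) //.
rewrite /Dx (deriv_at_eq Hl1) //.
Qed.

Lemma Sm_D d F : Sm F -> Sm (Dd d F).
Proof. move=> HF ds; rewrite -iterD_app; exact: HF. Qed.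

Lemma Sm_intro F :
  (forall x y, onE U x y -> cont_at U F x y /\
      forall d, exists l, derivable_pt_lim (fun t => ev F (sh d t x y)) 0 l) ->
  (forall d, Sm (Dd d F)) -> Sm F.
Proof.
move=> H0 HD ds; case/lastP: ds => [|ds d].
  move=> x y hE /=; have [Hc Hd] := H0 x y hE; split => // mu; split.
    exact: (Hd (false, mu)).
  exact: (Hd (true, mu)).
rewrite -cats1 iterD_app; exact: HD.
Qed.

Lemma cont_at_ext F G x y : (forall x' y', onE U x' y' -> F x' y' = G x' y') ->
  onE U x y -> cont_at U F x y -> cont_at U G x y.
Proof.
move=> H hE Hc eps He; have [d [Hd Hd2]] := Hc eps He; exists d; split => // x' y' hE' Hcl.
rewrite -!H //; exact: Hd2.
Qed.

Lemma Sm_ext F G : (forall x' y', onE U x' y' -> F x' y' = G x' y') -> Sm F -> Sm G.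
Proof.
move=> H HF ds x y hE; have [Hc Hd] := HF ds x y hE.
have Hi := iterD_loc ds H.
split; first exact: (cont_at_ext Hi hE Hc).
move=> mu; have [[l1 H1] [l2 H2]] := Hd mu; split.
  exists l1; have [del [Hdel Hs]] := onE_sh (false, mu) hE.
  apply: (dpl_loc Hdel _ H1) => t; rewrite Rminus_0_r => Ht; apply: Hi; exact: (Hs t Ht).
exists l2; have [del [Hdel Hs]] := onE_sh (true, mu) hE.
apply: (dpl_loc Hdel _ H2) => t; rewrite Rminus_0_r => Ht; apply: Hi; exact: (Hs t Ht).
Qed.

Lemma cont_at_const c x y : cont_at U (fun _ _ => c) x y.
Proof. move=> eps He; exists 1; split; [lra|] => *; rewrite Rminus_diag Rabs_R0 //. Qed.

Lemma cont_at_plus F G x y : cont_at U F x y -> cont_at U G x y ->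
  cont_at U (fun x y => F x y + G x y) x y.
Proof.
move=> HF HG eps He.
have He2 : 0 < eps / 2 by lra.
have [d1 [Hd1 H1]] := HF _ He2; have [d2 [Hd2 H2]] := HG _ He2.
exists (Rmin d1 d2); split; first exact: Rmin_pos.
move=> x' y' hE Hc.
have Hc1 : forall i, Rabs (x' i - x i) < d1 /\ Rabs (y' i - y i) < d1.
  move=> i; have [a b] := Hc i; split; apply: (Rlt_le_trans _ _ _ _ (Rmin_l d1 d2)) => //.
have Hc2 : forall i, Rabs (x' i - x i) < d2 /\ Rabs (y' i - y i) < d2.
  move=> i; have [a b] := Hc i; split; apply: (Rlt_le_trans _ _ _ _ (Rmin_r d1 d2)) => //.
have A := H1 _ _ hE Hc1; have B := H2 _ _ hE Hc2.
replace (F x' y' + G x' y' - (F x y + G x y)) with ((F x' y' - F x y) + (G x' y' - G x y)) by ring.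
apply: (Rle_lt_trans _ _ _ (Rabs_triang _ _)); lra.
Qed.

Lemma real_mult_bound a b a' b' e1 e2 :
  Rabs (a' - a) < e1 -> Rabs (b' - b) < e2 -> e2 <= 1 ->
  Rabs (a' * b' - a * b) <= e1 * (Rabs b + 1) + Rabs a * e2.
Proof.
move=> H1 H2 H3.
replace (a' * b' - a * b) with ((a' - a) * b' + a * (b' - b)) by ring.
apply: Rle_trans (Rabs_triang _ _) _; rewrite !Rabs_mult.
have Hb : Rabs b' <= Rabs b + 1.
  replace b' with ((b' - b) + b) by ring.
  apply: Rle_trans (Rabs_triang _ _) _; lra.
apply: Rplus_le_compat.
  apply: Rmult_le_compat; try apply: Rabs_pos; lra.
apply: Rmult_le_compat_l; [apply: Rabs_pos|lra].
Qed.

Lemma mult_cont_real a b eps : 0 < eps -> exists e1 e2, 0 < e1 /\ 0 < e2 /\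
  forall a' b', Rabs (a' - a) < e1 -> Rabs (b' - b) < e2 -> Rabs (a' * b' - a * b) < eps.
Proof.
move=> He.
have Ha := Rabs_pos a; have Hb := Rabs_pos b.
have He1 : 0 < eps / (2 * (Rabs b + 1)).
  apply: Rdiv_lt_0_compat; lra.
have He2 : 0 < Rmin 1 (eps / (2 * (Rabs a + 1))).
  apply: Rmin_pos; [lra|apply: Rdiv_lt_0_compat; lra].
exists (eps / (2 * (Rabs b + 1))), (Rmin 1 (eps / (2 * (Rabs a + 1)))); split => //; split => //.
move=> a' b' A B.
have Hbd := real_mult_bound A B (Rmin_l _ _).
have E1 : eps / (2 * (Rabs b + 1)) * (Rabs b + 1) = eps / 2 by field; lra.
have E2 : Rabs a * Rmin 1 (eps / (2 * (Rabs a + 1))) <= Rabs a * (eps / (2 * (Rabs a + 1))).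
  apply: Rmult_le_compat_l => //; apply: Rmin_r.
have E3 : Rabs a * (eps / (2 * (Rabs a + 1))) < eps / 2.
  replace (Rabs a * (eps / (2 * (Rabs a + 1)))) with ((eps/2) * (Rabs a / (Rabs a + 1))) by (field; lra).
  have : Rabs a / (Rabs a + 1) < 1.
    apply: (Rmult_lt_reg_r (Rabs a + 1)); first lra.
    rewrite /Rdiv Rmult_assoc Rinv_l; lra.
  move=> h; set q := Rabs a / (Rabs a + 1) in h *.
  have : 0 < eps / 2 * (1 - q) by apply: Rmult_lt_0_compat; lra.
  lra.
lra.
Qed.

Lemma cont_at_mult F G x y : cont_at U F x y -> cont_at U G x y ->
  cont_at U (fun x y => F x y * G x y) x y.
Proof.
move=> HF HG eps He.
have [e1 [e2 [He1 [He2 Hm]]]] := mult_cont_real (F x y) (G x y) He.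
have [d1 [Hd1 H1]] := HF _ He1; have [d2 [Hd2 H2]] := HG _ He2.
exists (Rmin d1 d2); split; first exact: Rmin_pos.
move=> x' y' hE Hc.
have Hc1 : forall i, Rabs (x' i - x i) < d1 /\ Rabs (y' i - y i) < d1.
  move=> i; have [u v] := Hc i; split; apply: (Rlt_le_trans _ _ _ _ (Rmin_l d1 d2)) => //.
have Hc2 : forall i, Rabs (x' i - x i) < d2 /\ Rabs (y' i - y i) < d2.
  move=> i; have [u v] := Hc i; split; apply: (Rlt_le_trans _ _ _ _ (Rmin_r d1 d2)) => //.
exact: Hm (H1 _ _ hE Hc1) (H2 _ _ hE Hc2).
Qed.
End Multi.

Section Closure.
Variable n : nat.
Variable U : ('I_n -> R) -> Prop.
Hypothesis HU : chart_open U.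
Local Notation Sm := (Sm U).
Local Notation onE := (onE U).

Definition SP (l : seq (Fn n * Fn n)) : Fn n :=
  fun x y => foldr (fun pr acc => pr.1 x y * pr.2 x y + acc) 0 l.
Definition SmL (l : seq (Fn n * Fn n)) := forall pr, List.In pr l -> Sm pr.1 /\ Sm pr.2.
Fixpoint dSP d (l : seq (Fn n * Fn n)) : seq (Fn n * Fn n) :=
  match l with
  | [::] => [::]
  | pr :: l' => (Dd d pr.1, pr.2) :: (pr.1, Dd d pr.2) :: dSP d l'
  end.

Lemma SmL_cons pr l : SmL (pr :: l) -> (Sm pr.1 /\ Sm pr.2) /\ SmL l.
Proof. move=> H; split; [apply: H; left|move=> q Hq; apply: H; right] => //. Qed.

Lemma dSP_SmL d l : SmL l -> SmL (dSP d l).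
Proof.
elim: l => [|pr l IH] H; first by move=> q [].
have [[A B] C] := SmL_cons H.
move=> q /= [<-|[<-|Hq]] /=; [split=> //; exact: Sm_D|split=> //; exact: Sm_D|exact: IH].
Qed.

Lemma SP_cont l x y : SmL l -> onE x y -> cont_at U (SP l) x y.
Proof.
elim: l => [|pr l IH] H hE; first exact: cont_at_const.
have [[A B] C] := SmL_cons H.
apply: (cont_at_plus (F := fun x y => pr.1 x y * pr.2 x y)); last exact: IH.
apply: cont_at_mult; exact: Sm_cont.
Qed.

Lemma SP_dpl l d x y : SmL l -> onE x y ->
  derivable_pt_lim (fun t => ev (SP l) (sh d t x y)) 0 (SP (dSP d l) x y).
Proof.
elim: l => [|pr l IH] H hE; first exact: dpl_const.
have [[A B] C] := SmL_cons H.
have H1 := dpl_plus (dpl_mult (Sm_dpl d A hE) (Sm_dpl d B hE)) (IH C hE).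
rewrite /ev sh0 /= in H1.
rewrite /SP /= -/(SP _ x y) Rplus_assoc in H1 *.
exact: H1.
Qed.

Lemma iterD_SP l : SmL l -> forall ds, exists l', SmL l' /\
  forall x y, onE x y -> iterD ds (SP l) x y = SP l' x y.
Proof.
move=> H; elim => [|d ds [l' [H1 H2]]]; first by exists l.
exists (dSP d l'); split; first exact: dSP_SmL.
move=> x y hE; rewrite iterD_cons (Dd_loc HU _ hE H2) Dd_def.
apply: deriv_at_eq; exact: SP_dpl.
Qed.

Lemma Sm_SP l : SmL l -> Sm (SP l).
Proof.
move=> H ds x y hE; have [l' [H1 H2]] := iterD_SP H ds.
split; first exact: (cont_at_ext (fun x y h => esym (H2 x y h)) hE (SP_cont H1 hE)).
move=> mu; split.
  exists (SP (dSP (false, mu) l') x y).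
  have [del [Hdel Hs]] := onE_sh HU (false, mu) hE.
  apply: (dpl_loc Hdel _ (SP_dpl (false, mu) H1 hE)) => t; rewrite Rminus_0_r => Ht.
  rewrite /ev H2 //; exact: Hs.
exists (SP (dSP (true, mu) l') x y).
have [del [Hdel Hs]] := onE_sh HU (true, mu) hE.
apply: (dpl_loc Hdel _ (SP_dpl (true, mu) H1 hE)) => t; rewrite Rminus_0_r => Ht.
rewrite /ev H2 //; exact: Hs.
Qed.

Lemma Dd_const (d : bool * 'I_n) (c : R) : Dd d (fun _ _ => c) = (fun _ (_ : 'I_n -> R) => 0).
Proof.
apply: functional_extensionality => x; apply: functional_extensionality => y.
rewrite Dd_def; apply: deriv_at_eq; exact: dpl_const.
Qed.

Lemma iterD_const (ds : seq (bool * 'I_n)) (c : R) : exists c', iterD ds (fun _ _ => c) = (fun _ (_ : 'I_n -> R) => c').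
Proof.
elim: ds => [|d ds [c' IH]]; first by exists c.
exists 0; by rewrite iterD_cons IH Dd_const.
Qed.

Lemma Sm_const (c : R) : Sm (fun _ (_ : 'I_n -> R) => c).
Proof.
move=> ds x y hE; have [c' ->] := iterD_const ds c.
split; first exact: cont_at_const.
move=> mu; split; exists 0; exact: dpl_const.
Qed.

Lemma Sm_mul F G : Sm F -> Sm G -> Sm (fun x y => F x y * G x y).
Proof.
move=> HF HG; apply: (Sm_ext HU (F := SP [:: (F, G)])); first by move=> x y _; rewrite /SP /=; ring.
apply: Sm_SP => q [<-|[]] //.
Qed.

Lemma Sm_plus F G : Sm F -> Sm G -> Sm (fun x y => F x y + G x y).
Proof.
move=> HF HG; apply: (Sm_ext HU (F := SP [:: (F, fun _ _ => 1); (fun _ _ => 1, G)])).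
  by move=> x y _; rewrite /SP /=; ring.
apply: Sm_SP => q [<-|[<-|[]]] //=; split=> //; exact: Sm_const.
Qed.

Lemma Sm_scal (c : R) F : Sm F -> Sm (fun x y => c * F x y).
Proof. move=> HF; apply: (Sm_mul (F := fun _ _ => c)) => //; exact: Sm_const. Qed.

Lemma Sm_minus F G : Sm F -> Sm G -> Sm (fun x y => F x y - G x y).
Proof.
move=> HF HG; apply: (Sm_ext HU (F := fun x y => F x y + (-1) * G x y)).
  by move=> x y _; ring.
apply: Sm_plus => //; exact: Sm_scal.
Qed.

Lemma Sm_sumL T (s : seq T) (F : T -> Fn n) : (forall i, Sm (F i)) ->
  Sm (fun x y => sumL s (fun i => F i x y)).
Proof.
move=> H; elim: s => [|a s IH]; first exact: Sm_const.
exact: (Sm_plus (F := F a) (G := fun x y => sumL s (fun i => F i x y))).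
Qed.

Lemma Sm_sumI (F : 'I_n -> Fn n) : (forall i, Sm (F i)) ->
  Sm (fun x y => sumI (fun i => F i x y)).
Proof. exact: Sm_sumL. Qed.

Lemma Dd_ycoord (d : bool * 'I_n) (c : 'I_n) : Dd d (fun _ y => y c) = (fun _ (_ : 'I_n -> R) => if d.1 && (c == d.2) then 1 else 0).
Proof.
apply: functional_extensionality => x; apply: functional_extensionality => y.
rewrite Dd_def; apply: deriv_at_eq.
case: d => [[] mu]; rewrite /ev /sh /= /upd.
  case: (c == mu) => /=.
    have := dpl_plus (dpl_const (y c) 0) (derivable_pt_lim_id 0).
    rewrite Rplus_0_l; exact.
  exact: dpl_const.
exact: dpl_const.
Qed.

Lemma Sm_ycoord (c : 'I_n) : Sm (fun _ y => y c).
Proof.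
apply: Sm_intro => [x y hE|d]; last by rewrite Dd_ycoord; exact: Sm_const.
split.
  move=> eps He; exists eps; split => // x' y' _ Hc; by have [_ h] := Hc c.
move=> d; exists (Dd d (fun _ y => y c) x y).
rewrite Dd_ycoord; case: d => [[] mu]; rewrite /ev /sh /= /upd.
  case: (c == mu) => /=.
    have := dpl_plus (dpl_const (y c) 0) (derivable_pt_lim_id 0).
    rewrite Rplus_0_l; exact.
  exact: dpl_const.
exact: dpl_const.
Qed.

Lemma Dd_mul d F G x y : Sm F -> Sm G -> onE x y ->
  Dd d (fun x y => F x y * G x y) x y = Dd d F x y * G x y + F x y * Dd d G x y.
Proof.
move=> HF HG hE; rewrite Dd_def; apply: deriv_at_eq.
have H := dpl_mult (Sm_dpl d HF hE) (Sm_dpl d HG hE).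
rewrite /ev sh0 /= in H; exact: H.
Qed.

Lemma Dd_plus d F G x y : Sm F -> Sm G -> onE x y ->
  Dd d (fun x y => F x y + G x y) x y = Dd d F x y + Dd d G x y.
Proof.
move=> HF HG hE; rewrite Dd_def; apply: deriv_at_eq.
exact: (dpl_plus (Sm_dpl d HF hE) (Sm_dpl d HG hE)).
Qed.

Lemma Dd_minus d F G x y : Sm F -> Sm G -> onE x y ->
  Dd d (fun x y => F x y - G x y) x y = Dd d F x y - Dd d G x y.
Proof.
move=> HF HG hE; rewrite Dd_def; apply: deriv_at_eq.
exact: (dpl_minus (Sm_dpl d HF hE) (Sm_dpl d HG hE)).
Qed.

Lemma Dd_scal d (c : R) F x y : Sm F -> onE x y ->
  Dd d (fun x y => c * F x y) x y = c * Dd d F x y.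
Proof.
move=> HF hE; rewrite (Dd_mul d (F := fun _ _ => c)) //; last exact: Sm_const.
rewrite Dd_const; ring.
Qed.

Lemma Dd_sumL T (s : seq T) d (F : T -> Fn n) x y : (forall i, Sm (F i)) -> onE x y ->
  Dd d (fun x y => sumL s (fun i => F i x y)) x y = sumL s (fun i => Dd d (F i) x y).
Proof.
move=> H hE; rewrite Dd_def; apply: deriv_at_eq.
have := @dpl_sumL T s (fun i t => ev (F i) (sh d t x y)) (fun i => Dd d (F i) x y) 0; apply => i; exact: Sm_dpl.
Qed.

Lemma Dd_sumI d (F : 'I_n -> Fn n) x y : (forall i, Sm (F i)) -> onE x y ->
  Dd d (fun x y => sumI (fun i => F i x y)) x y = sumI (fun i => Dd d (F i) x y).
Proof. exact: Dd_sumL. Qed.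

End Closure.

Lemma ex_derive_of (g : R -> R) x l : derivable_pt_lim g x l ->
  @Derive.ex_derive Hierarchy.R_AbsRing Hierarchy.R_NormedModule g x.
Proof. move=> H; exists l; by apply/Derive.is_derive_Reals. Qed.
Lemma Derive_of (g : R -> R) x l : derivable_pt_lim g x l -> Derive.Derive g x = l.
Proof. move=> H; apply: Derive.is_derive_unique; by apply/Derive.is_derive_Reals. Qed.

Section Schwarz.
Variable n : nat.
Variable U : ('I_n -> R) -> Prop.
Hypothesis HU : chart_open U.
Local Notation Sm := (Sm U).
Local Notation onE := (onE U).

Lemma dpl_sh (G : Fn n) d u wx wy : Sm G -> onE (sh d u wx wy).1 (sh d u wx wy).2 ->
  derivable_pt_lim (fun z => ev G (sh d z wx wy)) u (ev (Dd d G) (sh d u wx wy)).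
Proof.
move=> HG hE; apply: dpl_shift.
have -> : (fun s => ev G (sh d (u + s) wx wy)) =
          (fun s => ev G (sh d s (sh d u wx wy).1 (sh d u wx wy).2)).
  by apply: functional_extensionality => s; rewrite sh_sh.
exact: (Sm_dpl d HG hE).
Qed.

Lemma Sm_schwarz F d1 d2 x y : Sm F -> onE x y ->
  Dd d1 (Dd d2 F) x y = Dd d2 (Dd d1 F) x y.
Proof.
move=> HF hE.
case: (d1 =P d2) => [-> //|Hne0].
have Hne : d1 != d2 by apply/eqP.
have [del [Hdel Hcl]] := onE_open HU hE.
pose q u v := sh d1 u (sh d2 v x y).1 (sh d2 v x y).2.
have Hqc : forall u v e1 e2, 0 < e1 -> 0 < e2 -> Rabs u < e1 -> Rabs v < e2 ->
    close (e2 + e1) x y (q u v).1 (q u v).2.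
  move=> u v e1 e2 h1 h2 hu hv; apply: (close_trans (x1 := (sh d2 v x y).1) (y1 := (sh d2 v x y).2)); apply: close_sh => //.
have Hdel2 : 0 < del / 2 by lra.
have HqE : forall u v, Rabs u < del / 2 -> Rabs v < del / 2 -> onE (q u v).1 (q u v).2.
  move=> u v hu hv; apply: Hcl; have := Hqc u v _ _ Hdel2 Hdel2 hu hv.
  by replace (del / 2 + del / 2) with del by field.
have Hcomm : forall u v, q u v = sh d2 v (sh d1 u x y).1 (sh d1 u x y).2.
  by move=> u v; rewrite /q sh_comm.
pose f u v := ev F (q u v).
have D1 : forall u v, Rabs u < del / 2 -> Rabs v < del / 2 ->
    derivable_pt_lim (fun t => f t v) u (ev (Dd d1 F) (q u v)).
  move=> u v hu hv; rewrite /f /q; apply: dpl_sh => //; exact: HqE.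
have D2 : forall u v, Rabs u < del / 2 -> Rabs v < del / 2 ->
    derivable_pt_lim (fun t => f u t) v (ev (Dd d2 F) (q u v)).
  move=> u v hu hv.
  have -> : (fun t => f u t) = (fun t => ev F (sh d2 t (sh d1 u x y).1 (sh d1 u x y).2)).
    by apply: functional_extensionality => t; rewrite /f Hcomm.
  rewrite Hcomm; apply: dpl_sh => //; rewrite -Hcomm; exact: HqE.
have M1 : forall u v, Rabs u < del / 2 -> Rabs v < del / 2 ->
    derivable_pt_lim (fun z => Derive.Derive (fun t => f z t) v) u (ev (Dd d1 (Dd d2 F)) (q u v)).
  move=> u v hu hv.
  have Hr : 0 < del / 2 - Rabs u by lra.
  apply: (dpl_loc (f := fun z => ev (Dd d2 F) (q z v)) Hr).
    move=> z hz; symmetry; apply: Derive_of; apply: D2 => //.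
    have := Rabs_triang_inv z u; lra.
  rewrite /q; apply: dpl_sh; [exact: Sm_D|exact: HqE].
have M2 : forall u v, Rabs u < del / 2 -> Rabs v < del / 2 ->
    derivable_pt_lim (fun z => Derive.Derive (fun t => f t z) u) v (ev (Dd d2 (Dd d1 F)) (q u v)).
  move=> u v hu hv.
  have Hr : 0 < del / 2 - Rabs v by lra.
  apply: (dpl_loc (f := fun z => ev (Dd d1 F) (sh d2 z (sh d1 u x y).1 (sh d1 u x y).2)) Hr).
    move=> z hz; symmetry; rewrite -Hcomm; apply: Derive_of; apply: D1 => //.
    have := Rabs_triang_inv z v; lra.
  rewrite Hcomm; apply: dpl_sh; [exact: Sm_D|rewrite -Hcomm; exact: HqE].
have Hq00 : q 0 0 = (x, y) by rewrite /q !sh0.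
have Habs0 : forall t, Rabs (t - 0) = Rabs t by move=> t; rewrite Rminus_0_r.
have S := @Derive_2d.Schwarz f 0 0.
rewrite (Derive_of (M1 0 0 _ _)) ?(Derive_of (M2 0 0 _ _)) ?Hq00 ?Rabs_R0 // in S.
apply: S.
- exists (mkposreal _ Hdel2) => u v /= hu hv; rewrite !Habs0 in hu hv.
  split; first exact: ex_derive_of (D1 u v hu hv).
  split; first exact: ex_derive_of (D2 u v hu hv).
  split; first exact: ex_derive_of (M1 u v hu hv).
  exact: ex_derive_of (M2 u v hu hv).
- move=> eps.
  have [d [Hd Hc]] := Sm_cont (Sm_D d1 (Sm_D d2 HF)) hE (cond_pos eps).
  have Hm : 0 < Rmin (del / 2) (d / 2) by apply: Rmin_pos; lra.
  exists (mkposreal _ Hm) => u v /= hu hv; rewrite !Habs0 in hu hv.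
  have hu1 : Rabs u < del / 2 by apply: Rlt_le_trans hu (Rmin_l _ _).
  have hv1 : Rabs v < del / 2 by apply: Rlt_le_trans hv (Rmin_l _ _).
  have hu2 : Rabs u < d / 2 by apply: Rlt_le_trans hu (Rmin_r _ _).
  have hv2 : Rabs v < d / 2 by apply: Rlt_le_trans hv (Rmin_r _ _).
  rewrite (Derive_of (M1 u v hu1 hv1)) (Derive_of (M1 0 0 _ _)) ?Rabs_R0 // Hq00.
  apply: Hc; first exact: HqE.
  have Hd2 : 0 < d / 2 by lra.
  have Hh := Hqc u v _ _ Hd2 Hd2 hu2 hv2.
  replace (d / 2 + d / 2) with d in Hh by field; exact: Hh.
- move=> eps.
  have [d [Hd Hc]] := Sm_cont (Sm_D d2 (Sm_D d1 HF)) hE (cond_pos eps).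
  have Hm : 0 < Rmin (del / 2) (d / 2) by apply: Rmin_pos; lra.
  exists (mkposreal _ Hm) => u v /= hu hv; rewrite !Habs0 in hu hv.
  have hu1 : Rabs u < del / 2 by apply: Rlt_le_trans hu (Rmin_l _ _).
  have hv1 : Rabs v < del / 2 by apply: Rlt_le_trans hv (Rmin_l _ _).
  have hu2 : Rabs u < d / 2 by apply: Rlt_le_trans hu (Rmin_r _ _).
  have hv2 : Rabs v < d / 2 by apply: Rlt_le_trans hv (Rmin_r _ _).
  rewrite (Derive_of (M2 u v hu1 hv1)) (Derive_of (M2 0 0 _ _)) ?Rabs_R0 // Hq00.
  apply: Hc; first exact: HqE.
  have Hd2 : 0 < d / 2 by lra.
  have Hh := Hqc u v _ _ Hd2 Hd2 hu2 hv2.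
  replace (d / 2 + d / 2) with d in Hh by field; exact: Hh.
Qed.
End Schwarz.

Section Chain.
Variable n : nat.
Variable U : ('I_n -> R) -> Prop.
Hypothesis HU : chart_open U.
Local Notation Sm := (Sm U).
Local Notation onE := (onE U).

Lemma dpl_upd (F : Fn n) x w a c : Sm F -> onE x (upd w a c) ->
  derivable_pt_lim (fun t => F x (upd w a t)) c (Dy a F x (upd w a c)).
Proof.
move=> HF hE; apply: dpl_shift.
have -> : (fun s => F x (upd w a (c + s))) = (fun s => F x (upd (upd w a c) a s)).
  by apply: functional_extensionality => s; rewrite upd_upd.
exact: (Sm_dpl (true, a) HF hE).
Qed.

Lemma mvt_coord (F : Fn n) x w a T : Sm F ->
  (forall t, Rabs t <= Rabs T -> onE x (upd w a t)) ->
  exists c, Rabs c <= Rabs T /\ F x (upd w a T) - F x w = T * Dy a F x (upd w a c).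
Proof.
move=> HF Hon.
have E0 : F x (upd w a 0) = F x w by rewrite upd0.
case: (Rtotal_order T 0) => [Hlt|[Heq|Hgt]].
- have [c [Hc1 Hc2]] := MVT_cor2 (fun t => F x (upd w a t)) (fun t => Dy a F x (upd w a t)) T 0 Hlt
    (fun c hc => dpl_upd HF (Hon c (ltac:(rewrite !Rabs_left1; lra)))).
  exists c; split; first by rewrite !Rabs_left1; lra.
  rewrite -E0; lra.
- exists 0; subst T; rewrite upd0 Rabs_R0; split; [lra|ring].
- have [c [Hc1 Hc2]] := MVT_cor2 (fun t => F x (upd w a t)) (fun t => Dy a F x (upd w a t)) 0 T Hgt
    (fun c hc => dpl_upd HF (Hon c (ltac:(rewrite !Rabs_right; lra)))).
  exists c; split; first by rewrite !Rabs_right; lra.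
  rewrite -E0; lra.
Qed.

Definition zS (y v : 'I_n -> R) (S : seq 'I_n) (h : R) : 'I_n -> R :=
  fun i => y i + (if i \in S then h * v i else 0).

Lemma zS_cons y v a S h : a \notin S -> zS y v (a :: S) h = upd (zS y v S h) a (h * v a).
Proof.
move=> Ha; apply: functional_extensionality => i; rewrite /zS /upd in_cons.
case E: (i == a) => /=.
  move/eqP: E => ->; rewrite (negbTE Ha); ring.
by [].
Qed.

Lemma zS_0 y v S : zS y v S 0 = y.
Proof. apply: functional_extensionality => i; rewrite /zS; case: (i \in S); ring. Qed.

Lemma zS_nil y v h : zS y v [::] h = y.
Proof. apply: functional_extensionality => i; rewrite /zS /=; ring. Qed.

Lemma sumL_ge_term (s : seq 'I_n) (g : 'I_n -> R) i : (forall j, 0 <= g j) -> i \in s ->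
  g i <= sumL s g.
Proof.
move=> Hg; elim: s => [|a s IH] //; rewrite in_cons sumL_cons => /orP [/eqP ->|Hi].
  have : 0 <= sumL s g.
    elim: s {IH} => [|b s IH']; rewrite ?sumL_cons /sumL /=; first lra.
    rewrite -/(sumL s g); have := Hg b; lra.
  lra.
have := IH Hi; have := Hg a; lra.
Qed.

Lemma sumI_ge_term (g : 'I_n -> R) i : (forall j, 0 <= g j) -> g i <= sumI g.
Proof. move=> Hg; apply: sumL_ge_term => //; by rewrite mem_enum. Qed.

Lemma sumI_nonneg (g : 'I_n -> R) : (forall j, 0 <= g j) -> 0 <= sumI g.
Proof.
move=> Hg; rewrite /sumI; elim: (enum 'I_n) => [|b s IH] /=; first lra.
have := Hg b; lra.
Qed.

Lemma chain_coord (F : Fn n) x y v a S : Sm F -> onE x y -> a \notin S ->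
  derivable_pt_lim (fun h => F x (upd (zS y v S h) a (h * v a)) - F x (zS y v S h)) 0
    (v a * Dy a F x y).
Proof.
move=> HF hE Ha eps He.
have Hva := Rabs_pos (v a).
have He' : 0 < eps / (Rabs (v a) + 1) by apply: Rdiv_lt_0_compat; lra.
have [d1 [Hd1 Hc]] := Sm_cont (Sm_D (true, a) HF) hE He'.
have [del [Hdel Hcl]] := onE_open HU hE.
set M := 1 + sumI (fun i => Rabs (v i)).
have HM : forall i, Rabs (v i) <= M.
  move=> i; have h := sumI_ge_term (g := fun i => Rabs (v i)) i (fun j => Rabs_pos _).
  rewrite /M; lra.
have HM1 : 1 <= M.
  have := sumI_nonneg (g := fun i => Rabs (v i)) (fun j => Rabs_pos _); rewrite /M; lra.
set r := Rmin del d1.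
have Hr : 0 < r by apply: Rmin_pos.
have Hdh : 0 < r / M by apply: Rdiv_lt_0_compat; lra.
exists (mkposreal _ Hdh) => h hn /= hl.
have HhM : Rabs h * M < r.
  have := Rmult_lt_compat_r M _ _ (ltac:(lra)) hl.
  by rewrite /Rdiv Rmult_assoc Rinv_l ?Rmult_1_r; lra.
have Hclose : forall t, Rabs t <= Rabs (h * v a) -> close r x y x (upd (zS y v S h) a t).
  move=> t ht i; rewrite Rminus_diag Rabs_R0; split => //.
  rewrite /upd /zS; case E: (i == a).
    move/eqP: E => ->; rewrite (negbTE Ha).
    replace (y a + 0 + t - y a) with t by ring.
    apply: Rle_lt_trans ht _; rewrite Rabs_mult.
    apply: Rle_lt_trans HhM; apply: Rmult_le_compat_l; [exact: Rabs_pos|exact: HM].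
  case: (i \in S).
    replace (y i + h * v i - y i) with (h * v i) by ring; rewrite Rabs_mult.
    apply: Rle_lt_trans HhM; apply: Rmult_le_compat_l; [exact: Rabs_pos|exact: HM].
  by replace (y i + 0 - y i) with 0 by ring; rewrite Rabs_R0.
have Hon : forall t, Rabs t <= Rabs (h * v a) -> onE x (upd (zS y v S h) a t).
  move=> t ht; apply: Hcl; apply: close_mono (Hclose t ht); apply: Rmin_l.
have [c [Hc1 Hc2]] := mvt_coord HF Hon.
rewrite Rplus_0_l Rmult_0_l zS_0 upd0 Rminus_diag Rminus_0_r Hc2.
have Hcc := Hc x (upd (zS y v S h) a c) (Hon c Hc1)
  (fun i => let: conj u w := Hclose c Hc1 i in conj (Rlt_le_trans _ _ _ u (Rmin_r _ _))
                                                    (Rlt_le_trans _ _ _ w (Rmin_r _ _))).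
replace (h * v a * Dy a F x (upd (zS y v S h) a c) / h - v a * Dy a F x y)
  with (v a * (Dy a F x (upd (zS y v S h) a c) - Dy a F x y)) by (field; exact: hn).
rewrite Rabs_mult.
set D := Rabs (_ - _) in Hcc *.
have HD := Rabs_pos (Dy a F x (upd (zS y v S h) a c) - Dy a F x y).
have : Rabs (v a) * D <= Rabs (v a) * (eps / (Rabs (v a) + 1)).
  apply: Rmult_le_compat_l => //; lra.
have : Rabs (v a) * (eps / (Rabs (v a) + 1)) < eps.
  replace (Rabs (v a) * (eps / (Rabs (v a) + 1))) with (eps * (Rabs (v a) / (Rabs (v a) + 1)))
    by (field; lra).
  have : Rabs (v a) / (Rabs (v a) + 1) < 1.
    apply: (Rmult_lt_reg_r (Rabs (v a) + 1)); first lra.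
    rewrite /Rdiv Rmult_assoc Rinv_l; lra.
  move=> hq; set q := Rabs (v a) / _ in hq *.
  have : 0 < eps * (1 - q) by apply: Rmult_lt_0_compat; lra.
  lra.
lra.
Qed.

Lemma chain_S (F : Fn n) x y v S : Sm F -> onE x y -> uniq S ->
  derivable_pt_lim (fun h => F x (zS y v S h)) 0 (sumL S (fun a => v a * Dy a F x y)).
Proof.
move=> HF hE; elim: S => [|a S IH] /=.
  move=> _; rewrite /sumL /=.
  have -> : (fun h => F x (zS y v [::] h)) = (fun _ => F x y).
    by apply: functional_extensionality => h; rewrite zS_nil.
  exact: dpl_const.
move=> /andP [Ha Hu]; rewrite sumL_cons.
have -> : (fun h => F x (zS y v (a :: S) h)) =
  (fun h => (F x (upd (zS y v S h) a (h * v a)) - F x (zS y v S h)) + F x (zS y v S h)).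
  apply: functional_extensionality => h; rewrite zS_cons //; ring.
apply: dpl_plus; [exact: chain_coord|exact: IH].
Qed.

Lemma chain_rule (F : Fn n) x y v : Sm F -> onE x y ->
  derivable_pt_lim (fun h => F x (fun i => y i + h * v i)) 0 (sumI (fun a => v a * Dy a F x y)).
Proof.
move=> HF hE; have := chain_S v HF hE (enum_uniq 'I_n).
have -> : (fun h => F x (zS y v (enum 'I_n) h)) = (fun h => F x (fun i => y i + h * v i)).
  apply: functional_extensionality => h; f_equal; apply: functional_extensionality => i.
  by rewrite /zS mem_enum.
by [].
Qed.

Lemma euler (F : Fn n) x y k : Sm F -> onE x y ->
  (forall lam, 0 < lam -> F x (fun i => lam * y i) = lam ^ k * F x y) ->
  sumI (fun a => y a * Dy a F x y) = INR k * F x y.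
Proof.
move=> HF hE Hh.
have H1 := chain_rule y HF hE.
have H2 : derivable_pt_lim (fun h => (1 + h) ^ k * F x y) 0 (INR k * F x y).
  have := dpl_mult (dpl_unshift (derivable_pt_lim_pow 1 k)) (dpl_const (F x y) 0).
  move=> H; apply: (dpl_eqv H) => /=; rewrite pow1; ring.
have H3 : derivable_pt_lim (fun h => (1 + h) ^ k * F x y) 0 (sumI (fun a => y a * Dy a F x y)).
  apply: (dpl_loc (f := fun h => F x (fun i => y i + h * y i)) (d := 1)) => //; first lra.
  move=> t ht; rewrite Rminus_0_r in ht; rewrite -Hh; last first.
    move: ht; rewrite /Rabs; case: Rcase_abs; lra.
  f_equal; apply: functional_extensionality => i; ring.
exact: (uniqueness_limite _ _ _ _ H3 H2).
Qed.
End Chain.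

Section DRules.
Variable n : nat.
Variable U : ('I_n -> R) -> Prop.
Hypothesis HU : chart_open U.
Local Notation Sm := (Sm U).
Local Notation onE := (onE U).
Implicit Types F G : Fn n.

Lemma Sm_Dx mu F : Sm F -> Sm (Dx mu F). Proof. exact: (Sm_D (false, mu)). Qed.
Lemma Sm_Dy mu F : Sm F -> Sm (Dy mu F). Proof. exact: (Sm_D (true, mu)). Qed.

Lemma Dy_mul mu F G x y : Sm F -> Sm G -> onE x y ->
  Dy mu (fun x y => F x y * G x y) x y = Dy mu F x y * G x y + F x y * Dy mu G x y.
Proof. exact: (Dd_mul (true, mu)). Qed.
Lemma Dx_mul mu F G x y : Sm F -> Sm G -> onE x y ->
  Dx mu (fun x y => F x y * G x y) x y = Dx mu F x y * G x y + F x y * Dx mu G x y.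
Proof. exact: (Dd_mul (false, mu)). Qed.
Lemma Dy_minus mu F G x y : Sm F -> Sm G -> onE x y ->
  Dy mu (fun x y => F x y - G x y) x y = Dy mu F x y - Dy mu G x y.
Proof. exact: (Dd_minus (true, mu)). Qed.
Lemma Dx_minus mu F G x y : Sm F -> Sm G -> onE x y ->
  Dx mu (fun x y => F x y - G x y) x y = Dx mu F x y - Dx mu G x y.
Proof. exact: (Dd_minus (false, mu)). Qed.
Lemma Dy_plus mu F G x y : Sm F -> Sm G -> onE x y ->
  Dy mu (fun x y => F x y + G x y) x y = Dy mu F x y + Dy mu G x y.
Proof. exact: (Dd_plus (true, mu)). Qed.
Lemma Dx_plus mu F G x y : Sm F -> Sm G -> onE x y ->
  Dx mu (fun x y => F x y + G x y) x y = Dx mu F x y + Dx mu G x y.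
Proof. exact: (Dd_plus (false, mu)). Qed.
Lemma Dy_scal mu c F x y : Sm F -> onE x y ->
  Dy mu (fun x y => c * F x y) x y = c * Dy mu F x y.
Proof. exact: (Dd_scal (true, mu)). Qed.
Lemma Dx_scal mu c F x y : Sm F -> onE x y ->
  Dx mu (fun x y => c * F x y) x y = c * Dx mu F x y.
Proof. exact: (Dd_scal (false, mu)). Qed.
Lemma Dy_sumI mu (F : 'I_n -> Fn n) x y : (forall i, Sm (F i)) -> onE x y ->
  Dy mu (fun x y => sumI (fun i => F i x y)) x y = sumI (fun i => Dy mu (F i) x y).
Proof. exact: (Dd_sumI (true, mu)). Qed.
Lemma Dx_sumI mu (F : 'I_n -> Fn n) x y : (forall i, Sm (F i)) -> onE x y ->
  Dx mu (fun x y => sumI (fun i => F i x y)) x y = sumI (fun i => Dx mu (F i) x y).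
Proof. exact: (Dd_sumI (false, mu)). Qed.
Lemma Dy_ycoord (mu c : 'I_n) (x y : 'I_n -> R) : Dy mu (fun _ y => y c) x y = kdelta c mu.
Proof.
change (Dd (true, mu) (fun _ y => y c) x y = kdelta c mu).
by rewrite Dd_ycoord /kdelta.
Qed.
Lemma Dx_ycoord (mu c : 'I_n) (x y : 'I_n -> R) : Dx mu (fun _ y => y c) x y = 0.
Proof. change (Dd (false, mu) (fun _ y => y c) x y = 0); by rewrite Dd_ycoord. Qed.
Lemma Dy_loc mu F G x y : onE x y -> (forall x' y', onE x' y' -> F x' y' = G x' y') ->
  Dy mu F x y = Dy mu G x y.
Proof. exact: (Dd_loc HU (true, mu)). Qed.
Lemma Dx_loc mu F G x y : onE x y -> (forall x' y', onE x' y' -> F x' y' = G x' y') ->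
  Dx mu F x y = Dx mu G x y.
Proof. exact: (Dd_loc HU (false, mu)). Qed.
Lemma Dy_const (mu : 'I_n) (c : R) (x y : 'I_n -> R) : Dy mu (fun _ _ => c) x y = 0.
Proof. change (Dd (true, mu) (fun _ _ => c) x y = 0); by rewrite Dd_const. Qed.
Lemma schw d1 d2 F x y : Sm F -> onE x y -> Dd d1 (Dd d2 F) x y = Dd d2 (Dd d1 F) x y.
Proof. exact: Sm_schwarz. Qed.
Lemma schw_yy a b F x y : Sm F -> onE x y -> Dy a (Dy b F) x y = Dy b (Dy a F) x y.
Proof. exact: (Sm_schwarz HU (true, a) (true, b)). Qed.
Lemma schw_yx a b F x y : Sm F -> onE x y -> Dy a (Dx b F) x y = Dx b (Dy a F) x y.
Proof. exact: (Sm_schwarz HU (true, a) (false, b)). Qed.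
End DRules.

Section Geo.
Variable n : nat.
Variable U : ('I_n -> R) -> Prop.
Variable L : Fn n.
Variable ginv : 'I_n -> 'I_n -> Fn n.
Hypothesis HU : chart_open U.
Hypothesis HL : smooth_on U L.
Hypothesis Hhom : pos_homog2 U L.
Hypothesis Hg : forall a b, smooth_on U (ginv a b).
Hypothesis Hinv : forall x y, onE U x y -> forall a c,
     sumI (fun b => ginv a b x y * gmet L b c x y) = kdelta a c /\
     sumI (fun b => gmet L a b x y * ginv b c x y) = kdelta a c.
Local Notation Sm := (Sm U).
Local Notation onE := (onE U).

Lemma Sm_L : Sm L. Proof. exact: HL. Qed.
Lemma Sm_gi a b : Sm (ginv a b). Proof. exact: Hg. Qed.
Lemma Sm_g a b : Sm (gmet L a b). Proof. exact: (Sm_Dy a (Sm_Dy b HL)). Qed.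

Lemma Sm_spray a : Sm (spray L ginv a).
Proof.
apply: (Sm_scal HU (/2) (F := fun x y => sumI (fun d => ginv a d x y *
     (sumI (fun c => Dx c (Dy d L) x y * y c) - Dx d L x y)))).
apply: (Sm_sumI HU (F := fun d x y => ginv a d x y *
     (sumI (fun c => Dx c (Dy d L) x y * y c) - Dx d L x y))) => d.
apply: (Sm_mul HU (F := ginv a d) (G := fun x y =>
     (sumI (fun c => Dx c (Dy d L) x y * y c) - Dx d L x y))); first exact: Hg.
apply: (Sm_minus HU (F := fun x y => sumI (fun c => Dx c (Dy d L) x y * y c))
  (G := Dx d L)); last exact: Sm_Dx.
apply: (Sm_sumI HU (F := fun c x y => Dx c (Dy d L) x y * y c)) => c.
apply: (Sm_mul HU (F := Dx c (Dy d L)) (G := fun _ y => y c)).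
  exact: (Sm_Dx c (Sm_Dy d HL)).
exact: Sm_ycoord.
Qed.

Lemma Sm_N a mu : Sm (Nconn L ginv a mu). Proof. exact: (Sm_Dy mu (Sm_spray a)). Qed.
Lemma Sm_B a mu nu : Sm (Berwald L ginv a mu nu). Proof. exact: (Sm_Dy nu (Sm_N a mu)). Qed.

Lemma Sm_Ddelta mu F : Sm F -> Sm (Ddelta L ginv mu F).
Proof.
move=> HF.
apply: (Sm_minus HU (F := Dx mu F) (G := fun x y => sumI (fun nu => Nconn L ginv nu mu x y * Dy nu F x y))).
  exact: Sm_Dx.
apply: (Sm_sumI HU (F := fun nu x y => Nconn L ginv nu mu x y * Dy nu F x y)) => nu.
apply: (Sm_mul HU (F := Nconn L ginv nu mu) (G := Dy nu F)); [exact: Sm_N|exact: Sm_Dy].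
Qed.

Lemma gsym x y a b : onE x y -> gmet L a b x y = gmet L b a x y.
Proof. move=> hE; rewrite /gmet; exact: (schw_yy HU _ _ HL hE). Qed.

Lemma gsymF a b : forall x y, onE x y -> gmet L a b x y = gmet L b a x y.
Proof. move=> x y; exact: gsym. Qed.

Lemma inv_l x y a c : onE x y -> sumI (fun b => ginv a b x y * gmet L b c x y) = kdelta a c.
Proof. move=> hE; exact: (Hinv hE a c).1. Qed.
Lemma inv_r x y a c : onE x y -> sumI (fun b => gmet L a b x y * ginv b c x y) = kdelta a c.
Proof. move=> hE; exact: (Hinv hE a c).2. Qed.

Lemma gisym x y a c : onE x y -> ginv a c x y = ginv c a x y.
Proof.
move=> hE.
have E : sumI (fun b => sumI (fun d => ginv b a x y * gmet L b d x y * ginv d c x y)) =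
         sumI (fun d => sumI (fun b => ginv b a x y * gmet L b d x y * ginv d c x y)) by rewrite sumI_swap.
have E1 : sumI (fun b => sumI (fun d => ginv b a x y * gmet L b d x y * ginv d c x y)) = ginv c a x y.
  rewrite -(sumI_kd_l' c (fun b => ginv b a x y)).
  apply: sumI_ext => b; rewrite -(inv_r b c hE) -sumI_scal_r; apply: sumI_ext => d; ring.
have E2 : sumI (fun d => sumI (fun b => ginv b a x y * gmet L b d x y * ginv d c x y)) = ginv a c x y.
  rewrite -(sumI_kd_l a (fun d => ginv d c x y)).
  apply: sumI_ext => d.
  have -> : kdelta a d = sumI (fun b => gmet L d b x y * ginv b a x y).
    by rewrite inv_r // kdelta_sym.
  rewrite -sumI_scal_r; apply: sumI_ext => b; rewrite (gsym _ _ hE); ring.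
by rewrite -E1 -E2 E.
Qed.

Lemma dginv d x y a c : onE x y ->
  Dd d (ginv a c) x y = - sumI (fun b => sumI (fun e => ginv a b x y * Dd d (gmet L b e) x y * ginv e c x y)).
Proof.
move=> hE.
have E : forall e, sumI (fun b => Dd d (ginv a b) x y * gmet L b e x y) =
                   - sumI (fun b => ginv a b x y * Dd d (gmet L b e) x y).
  move=> e.
  have H0 : Dd d (fun x y => sumI (fun b => ginv a b x y * gmet L b e x y)) x y = 0.
    rewrite (Dd_loc HU d (G := fun _ _ => kdelta a e)) ?Dd_const //.
    move=> x' y' h'; exact: inv_l.
  rewrite (Dd_sumI (U := U) d (F := fun b x y => ginv a b x y * gmet L b e x y)) // in H0; last first.
    move=> b; exact: (Sm_mul HU (Sm_gi a b) (Sm_g b e)).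
  have H1 : sumI (fun b => Dd d (ginv a b) x y * gmet L b e x y + ginv a b x y * Dd d (gmet L b e) x y) = 0.
    rewrite -H0; apply: sumI_ext => b; rewrite (Dd_mul (U := U)) //; [exact: Sm_gi|exact: Sm_g].
  rewrite sumI_plus in H1; lra.
transitivity (sumI (fun b => Dd d (ginv a b) x y * kdelta b c)).
  by rewrite sumI_kd_r.
transitivity (sumI (fun e => sumI (fun b => Dd d (ginv a b) x y * gmet L b e x y) * ginv e c x y)).
  under sumI_ext => b do rewrite -(inv_r b c hE) -sumI_scal_l.
  rewrite sumI_swap; apply: sumI_ext => e; rewrite -sumI_scal_r; apply: sumI_ext => b; ring.
under sumI_ext => e do rewrite E.
rewrite sumI_swap -sumI_opp; apply: sumI_ext => e.
rewrite -sumI_opp -sumI_scal_r -sumI_opp; apply: sumI_ext => b; ring.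
Qed.
End Geo.

Section Geo2.
Variable n : nat.
Variable U : ('I_n -> R) -> Prop.
Variable L : Fn n.
Variable ginv : 'I_n -> 'I_n -> Fn n.
Hypothesis HU : chart_open U.
Hypothesis HL : smooth_on U L.
Hypothesis Hhom : pos_homog2 U L.
Hypothesis Hg : forall a b, smooth_on U (ginv a b).
Hypothesis Hinv : forall x y, onE U x y -> forall a c,
     sumI (fun b => ginv a b x y * gmet L b c x y) = kdelta a c /\
     sumI (fun b => gmet L a b x y * ginv b c x y) = kdelta a c.
Local Notation Sm := (Sm U).
Local Notation onE := (onE U).
Local Notation N := (Nconn L ginv).
Local Notation Dl := (Ddelta L ginv).

Lemma Ddelta_mul mu F G x y : Sm F -> Sm G -> onE x y ->
  Dl mu (fun x y => F x y * G x y) x y = Dl mu F x y * G x y + F x y * Dl mu G x y.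
Proof.
move=> HF HG hE; rewrite /Ddelta (Dx_mul (U := U)) //.
under sumI_ext => nu do rewrite (Dy_mul (U := U)) //.
have -> : sumI (fun nu => N nu mu x y * (Dy nu F x y * G x y + F x y * Dy nu G x y)) =
  sumI (fun nu => N nu mu x y * Dy nu F x y) * G x y + F x y * sumI (fun nu => N nu mu x y * Dy nu G x y).
  rewrite -sumI_scal_r -sumI_scal_l -sumI_plus; apply: sumI_ext => nu; ring.
ring.
Qed.

Lemma Ddelta_sumI mu (F : 'I_n -> Fn n) x y : (forall i, Sm (F i)) -> onE x y ->
  Dl mu (fun x y => sumI (fun i => F i x y)) x y = sumI (fun i => Dl mu (F i) x y).
Proof.
move=> HF hE; rewrite /Ddelta (Dx_sumI (U := U)) //.
have E : forall nu, N nu mu x y * Dy nu (fun x y => sumI (fun i => F i x y)) x y =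
  sumI (fun i => N nu mu x y * Dy nu (F i) x y).
  move=> nu; rewrite (Dy_sumI (U := U) nu HF hE) -sumI_scal_l //.
rewrite (sumI_ext E) sumI_swap -sumI_minus //.
Qed.

Lemma sandwich_lin (A B : 'I_n -> R) (M0 : 'I_n -> 'I_n -> R) (k : 'I_n -> R)
  (M : 'I_n -> 'I_n -> 'I_n -> R) :
  sumI (fun b => sumI (fun e => A b * (M0 b e - sumI (fun nu => k nu * M nu b e)) * B e)) =
  sumI (fun b => sumI (fun e => A b * M0 b e * B e)) -
  sumI (fun nu => k nu * sumI (fun b => sumI (fun e => A b * M nu b e * B e))).
Proof.
have -> : sumI (fun nu => k nu * sumI (fun b => sumI (fun e => A b * M nu b e * B e))) =
          sumI (fun b => sumI (fun e => sumI (fun nu => k nu * (A b * M nu b e * B e)))).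
  under sumI_ext => nu do rewrite -sumI_scal_l.
  rewrite sumI_swap; apply: sumI_ext => b.
  under sumI_ext => nu do rewrite -sumI_scal_l.
  by rewrite sumI_swap.
rewrite -sumI_minus; apply: sumI_ext => b.
rewrite -sumI_minus; apply: sumI_ext => e.
rewrite Rmult_minus_distr_l Rmult_minus_distr_r; f_equal.
rewrite -sumI_scal_l -sumI_scal_r; apply: sumI_ext => nu; ring.
Qed.

Lemma dginv_x mu x y a c : onE x y ->
  Dx mu (ginv a c) x y = - sumI (fun b => sumI (fun e => ginv a b x y * Dx mu (gmet L b e) x y * ginv e c x y)).
Proof. exact: (dginv HU HL Hg Hinv (false, mu)). Qed.
Lemma dginv_y mu x y a c : onE x y ->
  Dy mu (ginv a c) x y = - sumI (fun b => sumI (fun e => ginv a b x y * Dy mu (gmet L b e) x y * ginv e c x y)).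
Proof. exact: (dginv HU HL Hg Hinv (true, mu)). Qed.

Lemma Ddelta_ginv mu a c x y : onE x y ->
  Dl mu (ginv a c) x y = - sumI (fun b => sumI (fun e => ginv a b x y * Dl mu (gmet L b e) x y * ginv e c x y)).
Proof.
move=> hE; rewrite /Ddelta.
rewrite dginv_x //.
have E : forall nu, N nu mu x y * Dy nu (ginv a c) x y =
   - (N nu mu x y * sumI (fun b => sumI (fun e => ginv a b x y * Dy nu (gmet L b e) x y * ginv e c x y))).
  move=> nu; rewrite dginv_y //; ring.
rewrite (sumI_ext E) sumI_opp.
rewrite (sandwich_lin (fun b => ginv a b x y) (fun e => ginv e c x y)
   (fun b e => Dx mu (gmet L b e) x y) (fun nu => N nu mu x y) (fun nu b e => Dy nu (gmet L b e) x y)).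
ring.
Qed.
End Geo2.

Section Geo3.
Variable n : nat.
Variable U : ('I_n -> R) -> Prop.
Variable L : Fn n.
Variable ginv : 'I_n -> 'I_n -> Fn n.
Hypothesis HU : chart_open U.
Hypothesis HL : smooth_on U L.
Hypothesis Hhom : pos_homog2 U L.
Hypothesis Hg : forall a b, smooth_on U (ginv a b).
Hypothesis Hinv : forall x y, onE U x y -> forall a c,
     sumI (fun b => ginv a b x y * gmet L b c x y) = kdelta a c /\
     sumI (fun b => gmet L a b x y * ginv b c x y) = kdelta a c.
Local Notation Sm := (Sm U).
Local Notation onE := (onE U).
Local Notation N := (Nconn L ginv).
Local Notation Dl := (Ddelta L ginv).

Lemma onE_scale x y lam : onE x y -> 0 < lam -> onE x (fun i => lam * y i).
Proof.
move=> [Ux [i Hi]] Hl; split => //; exists i => E.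
have : lam * y i <> 0 by apply: Rmult_integral_contrapositive; split; lra.
by [].
Qed.

Lemma upd_scale (y : 'I_n -> R) s t lam :
  (fun i => lam * upd y s t i) = upd (fun i => lam * y i) s (lam * t).
Proof. apply: functional_extensionality => i; rewrite /upd; case: (i == s); ring. Qed.

Lemma homY s x y lam : onE x y -> 0 < lam ->
  Dy s L x (fun i => lam * y i) = lam * Dy s L x y.
Proof.
move=> hE Hl; have hE' := onE_scale hE Hl.
have [del [Hd Hs]] := onE_sh HU (true, s) hE.
have H1 := @dpl_scale (fun t => L x (upd (fun i => lam * y i) s t)) lam _ (Sm_dpl (true, s) HL hE').
have H2 : derivable_pt_lim (fun t => lam ^ 2 * L x (upd y s t)) 0 (lam * Dy s L x (fun i => lam * y i)).
  apply: (dpl_loc Hd _ H1) => t; rewrite Rminus_0_r => Ht.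
  rewrite -upd_scale Hhom //; exact: (Hs t Ht).
have H3 : derivable_pt_lim (fun t => lam ^ 2 * L x (upd y s t)) 0 (lam ^ 2 * Dy s L x y).
  apply: (dpl_eqv (dpl_mult (dpl_const (lam ^ 2) 0) (Sm_dpl (true, s) HL hE))); rewrite /Dd /=; ring.
have E := uniqueness_limite _ _ _ _ H2 H3.
apply: (Rmult_eq_reg_l lam); [rewrite E; ring|lra].
Qed.

Lemma homX c x y lam : onE x y -> 0 < lam ->
  Dx c L x (fun i => lam * y i) = lam ^ 2 * Dx c L x y.
Proof.
move=> hE Hl; have hE' := onE_scale hE Hl.
have [del [Hd Hs]] := onE_sh HU (false, c) hE.
have H1 := Sm_dpl (false, c) HL hE'.
have H2 : derivable_pt_lim (fun t => lam ^ 2 * L (upd x c t) y) 0 (Dx c L x (fun i => lam * y i)).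
  apply: (dpl_loc Hd _ H1) => t; rewrite Rminus_0_r => Ht.
  rewrite /ev /= Hhom //; exact: (Hs t Ht).
have H3 : derivable_pt_lim (fun t => lam ^ 2 * L (upd x c t) y) 0 (lam ^ 2 * Dx c L x y).
  apply: (dpl_eqv (dpl_mult (dpl_const (lam ^ 2) 0) (Sm_dpl (false, c) HL hE))); rewrite /Dd /=; ring.
exact: (uniqueness_limite _ _ _ _ H2 H3).
Qed.

Lemma euler1 s x y : onE x y -> sumI (fun a => y a * Dy a (Dy s L) x y) = Dy s L x y.
Proof.
move=> hE; rewrite (euler HU (F := Dy s L) (k := 1)) //.
- rewrite /INR; ring.
- exact: Sm_Dy.
- move=> lam Hl; rewrite homY //; ring.
Qed.

Lemma euler2 c x y : onE x y -> sumI (fun a => y a * Dy a (Dx c L) x y) = 2 * Dx c L x y.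
Proof.
move=> hE; rewrite (euler HU (F := Dx c L) (k := 2)) //.
- exact: Sm_Dx.
- move=> lam Hl; rewrite homX //.
Qed.

Definition Aq (d : 'I_n) (x y : 'I_n -> R) : R :=
  sumI (fun c => Dx c (Dy d L) x y * y c) - Dx d L x y.

Lemma spray_g g x y : onE x y ->
  sumI (fun a => gmet L g a x y * spray L ginv a x y) = / 2 * Aq g x y.
Proof.
move=> hE; rewrite /spray.
have -> : sumI (fun a => gmet L g a x y * (/ 2 * sumI (fun d => ginv a d x y *
     (sumI (fun c => Dx c (Dy d L) x y * y c) - Dx d L x y)))) =
  / 2 * sumI (fun d => sumI (fun a => gmet L g a x y * ginv a d x y) * Aq d x y).
  transitivity (sumI (fun a => sumI (fun d => / 2 * (gmet L g a x y * ginv a d x y * Aq d x y)))).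
    apply: sumI_ext => a; rewrite -sumI_scal_l -sumI_scal_l; apply: sumI_ext => d; rewrite /Aq; ring.
  rewrite sumI_swap -sumI_scal_l; apply: sumI_ext => d.
  rewrite -sumI_scal_r -sumI_scal_l; apply: sumI_ext => a; ring.
under sumI_ext => d do rewrite (inv_r Hinv) //.
by rewrite sumI_kd_l.
Qed.

Lemma Lsig s x y : onE x y -> Dy s L x y = sumI (fun a => gmet L s a x y * y a).
Proof.
move=> hE; rewrite -euler1 //; apply: sumI_ext => a.
rewrite (gsym HU HL s a hE) /gmet; ring.
Qed.

Lemma P_id x y : onE x y ->
  sumI (fun s => spray L ginv s x y * Dy s L x y) = / 2 * sumI (fun c => y c * Dx c L x y).
Proof.
move=> hE.
have E1 : sumI (fun s => spray L ginv s x y * Dy s L x y) =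
          sumI (fun a => / 2 * Aq a x y * y a).
  under sumI_ext => s do rewrite Lsig // -sumI_scal_l.
  rewrite sumI_swap; apply: sumI_ext => a.
  rewrite -spray_g // -sumI_scal_r; apply: sumI_ext => s.
  rewrite (gsym HU HL s a hE); ring.
have E2 : sumI (fun a => sumI (fun c => Dx c (Dy a L) x y * y c) * y a) =
          sumI (fun c => y c * (2 * Dx c L x y)).
  under sumI_ext => a do rewrite -sumI_scal_r.
  rewrite sumI_swap; apply: sumI_ext => c.
  rewrite -euler2 // -sumI_scal_l; apply: sumI_ext => a.
  rewrite (schw_yx HU a c HL hE); ring.
rewrite E1.
have -> : sumI (fun a => / 2 * Aq a x y * y a) =
   / 2 * (sumI (fun a => sumI (fun c => Dx c (Dy a L) x y * y c) * y a) -
          sumI (fun a => y a * Dx a L x y)).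
  rewrite -sumI_minus -sumI_scal_l; apply: sumI_ext => a; rewrite /Aq; ring.
rewrite E2.
have -> : sumI (fun c => y c * (2 * Dx c L x y)) = 2 * sumI (fun c => y c * Dx c L x y).
  rewrite -sumI_scal_l; apply: sumI_ext => c; ring.
ring.
Qed.

Lemma deltaL g x y : onE x y -> Dl g L x y = 0.
Proof.
move=> hE.
have Sm_sp := Sm_spray HU HL Hg.
have HP : Dy g (fun x y => sumI (fun s => spray L ginv s x y * Dy s L x y)) x y =
          Dy g (fun x y => / 2 * sumI (fun c => y c * Dx c L x y)) x y.
  apply: (Dy_loc HU) => // x' y' h'; exact: P_id.
have E1 : Dy g (fun x y => sumI (fun s => spray L ginv s x y * Dy s L x y)) x y =
          sumI (fun s => N s g x y * Dy s L x y + spray L ginv s x y * gmet L g s x y).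
  rewrite (Dy_sumI (U := U) g (F := fun s x y => spray L ginv s x y * Dy s L x y)) //.
    apply: sumI_ext => s; rewrite (Dy_mul (U := U)) //; exact: Sm_Dy.
  move=> s; apply: (Sm_mul HU (Sm_sp s)); exact: Sm_Dy.
have E2 : Dy g (fun x y => / 2 * sumI (fun c => y c * Dx c L x y)) x y =
          / 2 * (Dx g L x y + sumI (fun c => y c * Dx c (Dy g L) x y)).
  rewrite (Dy_scal (U := U) g (/2) (F := fun x y => sumI (fun c => y c * Dx c L x y))) //; last first.
    apply: (Sm_sumI HU (F := fun c x y => y c * Dx c L x y)) => c.
    apply: (Sm_mul HU (F := fun _ y => y c)); [exact: Sm_ycoord|exact: Sm_Dx].
  f_equal.
  rewrite (Dy_sumI (U := U) g (F := fun c x y => y c * Dx c L x y)) //; last first.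
    move=> c; apply: (Sm_mul HU (F := fun _ y => y c)); [exact: Sm_ycoord|exact: Sm_Dx].
  have -> : Dx g L x y = sumI (fun c => kdelta c g * Dx c L x y) by rewrite sumI_kd_l'.
  rewrite -sumI_plus; apply: sumI_ext => c.
  rewrite (Dy_mul (U := U) g (F := fun _ y => y c)) //; [|exact: Sm_ycoord|exact: Sm_Dx].
  rewrite Dy_ycoord (schw_yx HU g c HL hE); ring.
have E3 : sumI (fun s => spray L ginv s x y * gmet L g s x y) = / 2 * Aq g x y.
  rewrite -spray_g //; apply: sumI_ext => s; ring.
rewrite E1 sumI_plus E3 E2 in HP.
rewrite /Ddelta.
have -> : sumI (fun nu => N nu g x y * Dy nu L x y) =
   / 2 * (Dx g L x y + sumI (fun c => y c * Dx c (Dy g L) x y)) - / 2 * Aq g x y by lra.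
rewrite /Aq.
have -> : sumI (fun c => y c * Dx c (Dy g L) x y) = sumI (fun c => Dx c (Dy g L) x y * y c).
  apply: sumI_ext => c; ring.
lra.
Qed.
End Geo3.

Section Geo4.
Variable n : nat.
Variable U : ('I_n -> R) -> Prop.
Variable L : Fn n.
Variable ginv : 'I_n -> 'I_n -> Fn n.
Hypothesis HU : chart_open U.
Hypothesis HL : smooth_on U L.
Hypothesis Hhom : pos_homog2 U L.
Hypothesis Hg : forall a b, smooth_on U (ginv a b).
Hypothesis Hinv : forall x y, onE U x y -> forall a c,
     sumI (fun b => ginv a b x y * gmet L b c x y) = kdelta a c /\
     sumI (fun b => gmet L a b x y * ginv b c x y) = kdelta a c.
Local Notation Sm := (Sm U).
Local Notation onE := (onE U).
Local Notation N := (Nconn L ginv).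
Local Notation Bw := (Berwald L ginv).
Local Notation Dl := (Ddelta L ginv).

Let SmN a mu : Sm (N a mu) := Sm_N HU HL Hg a mu.
Let SmB a mu nu : Sm (Bw a mu nu) := Sm_B HU HL Hg a mu nu.

Definition Ht a b c x y : R :=
  Dl c (gmet L a b) x y - sumI (fun s => Bw s c b x y * gmet L a s x y + Bw s c a x y * gmet L b s x y).

(* psi_{b,c} = Dy b (delta_c L) vanishes identically *)
Definition psi b c : Fn n := fun x y =>
  Dy b (Dx c L) x y - sumI (fun s => Bw s c b x y * Dy s L x y + N s c x y * Dy b (Dy s L) x y).

Lemma psi0 b c x y : onE x y -> psi b c x y = 0.
Proof.
move=> hE.
have H0 : Dy b (fun x y => Dx c L x y - sumI (fun s => N s c x y * Dy s L x y)) x y = 0.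
  rewrite (Dy_loc HU b (G := fun _ _ => 0)) ?Dy_const //.
  move=> x' y' h'; exact: (deltaL HU HL Hhom Hg Hinv c h').
rewrite (Dy_minus (U := U) b (F := Dx c L) (G := fun x y => sumI (fun s => N s c x y * Dy s L x y))) // in H0;
  last first.
- apply: (Sm_sumI HU (F := fun s x y => N s c x y * Dy s L x y)) => s.
  apply: (Sm_mul HU (SmN s c)); exact: Sm_Dy.
- exact: Sm_Dx.
rewrite (Dy_sumI (U := U) b (F := fun s x y => N s c x y * Dy s L x y)) // in H0; last first.
  move=> s; apply: (Sm_mul HU (SmN s c)); exact: Sm_Dy.
rewrite -H0 /psi; f_equal; apply: sumI_ext => s.
rewrite (Dy_mul (U := U)) //; exact: Sm_Dy.
Qed.

Lemma Sm_psi b c : Sm (psi b c).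
Proof.
apply: (Sm_minus HU (F := Dy b (Dx c L))); first exact: Sm_Dy (Sm_Dx _ HL).
apply: (Sm_sumI HU (F := fun s x y => Bw s c b x y * Dy s L x y + N s c x y * Dy b (Dy s L) x y)) => s.
apply: (Sm_plus HU (F := fun x y => Bw s c b x y * Dy s L x y)).
  apply: (Sm_mul HU (SmB s c b)); exact: Sm_Dy.
apply: (Sm_mul HU (SmN s c)); exact: Sm_Dy (Sm_Dy _ HL).
Qed.

Lemma Ht_formula a b c x y : onE x y ->
  Ht a b c x y = sumI (fun s => Dy a (Bw s c b) x y * Dy s L x y).
Proof.
move=> hE.
have H0 : Dy a (psi b c) x y = 0.
  rewrite (Dy_loc HU a (G := fun _ _ => 0)) ?Dy_const //.
  move=> x' y' h'; exact: psi0.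
rewrite /psi in H0.
rewrite (Dy_minus (U := U) a (F := Dy b (Dx c L))
  (G := fun x y => sumI (fun s => Bw s c b x y * Dy s L x y + N s c x y * Dy b (Dy s L) x y))) // in H0;
  last first.
- apply: (Sm_sumI HU (F := fun s x y => Bw s c b x y * Dy s L x y + N s c x y * Dy b (Dy s L) x y)) => s.
  apply: (Sm_plus HU (F := fun x y => Bw s c b x y * Dy s L x y)).
    apply: (Sm_mul HU (SmB s c b)); exact: Sm_Dy.
  apply: (Sm_mul HU (SmN s c)); exact: Sm_Dy (Sm_Dy _ HL).
- exact: Sm_Dy (Sm_Dx _ HL).
rewrite (Dy_sumI (U := U) a (F := fun s x y => Bw s c b x y * Dy s L x y + N s c x y * Dy b (Dy s L) x y))
  // in H0; last first.
  move=> s; apply: (Sm_plus HU (F := fun x y => Bw s c b x y * Dy s L x y)).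
    apply: (Sm_mul HU (SmB s c b)); exact: Sm_Dy.
  apply: (Sm_mul HU (SmN s c)); exact: Sm_Dy (Sm_Dy _ HL).
have E1 : Dy a (Dy b (Dx c L)) x y = Dx c (gmet L a b) x y.
  rewrite (Dy_loc HU a (G := Dx c (Dy b L))) //; last first.
    move=> x' y' h'; exact: (schw_yx HU b c HL h').
  rewrite /gmet; exact: (schw_yx HU a c (Sm_Dy _ HL) hE).
have E2 : forall s, Dy a (fun x y => Bw s c b x y * Dy s L x y + N s c x y * Dy b (Dy s L) x y) x y =
   Dy a (Bw s c b) x y * Dy s L x y + Bw s c b x y * gmet L a s x y +
   (Bw s c a x y * gmet L b s x y + N s c x y * Dy s (gmet L a b) x y).
  move=> s.
  rewrite (Dy_plus (U := U) a (F := fun x y => Bw s c b x y * Dy s L x y)); last first.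
  - by [].
  - apply: (Sm_mul HU (SmN s c)); exact: Sm_Dy (Sm_Dy _ HL).
  - apply: (Sm_mul HU (SmB s c b)); exact: Sm_Dy.
  rewrite (Dy_mul (U := U) a (SmB s c b)) //; last exact: Sm_Dy.
  rewrite (Dy_mul (U := U) a (SmN s c)) //; last exact: Sm_Dy (Sm_Dy _ HL).
  have -> : Dy a (Dy b (Dy s L)) x y = Dy s (gmet L a b) x y.
    rewrite (Dy_loc HU a (G := Dy s (Dy b L))) //; last first.
      move=> x' y' h'; exact: (schw_yy HU b s HL h').
    rewrite /gmet; exact: (schw_yy HU a s (Sm_Dy _ HL) hE).
  rewrite -/(gmet L a s) -/(gmet L b s).
  have -> : Dy a (N s c) x y = Bw s c a x y by [].
  ring.
rewrite E1 (sumI_ext E2) in H0.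
rewrite /Ht /Ddelta.
have E3 := sumI_plus (fun s => Dy a (Bw s c b) x y * Dy s L x y + Bw s c b x y * gmet L a s x y)
   (fun s => Bw s c a x y * gmet L b s x y + N s c x y * Dy s (gmet L a b) x y).
rewrite E3 in H0.
have E4 := sumI_plus (fun s => Dy a (Bw s c b) x y * Dy s L x y) (fun s => Bw s c b x y * gmet L a s x y).
have E5 := sumI_plus (fun s => Bw s c a x y * gmet L b s x y) (fun s => N s c x y * Dy s (gmet L a b) x y).
have E6 := sumI_plus (fun s => Bw s c b x y * gmet L a s x y) (fun s => Bw s c a x y * gmet L b s x y).
rewrite E4 E5 in H0; rewrite E6; lra.
Qed.
End Geo4.

Section Geo5.
Variable n : nat.
Variable U : ('I_n -> R) -> Prop.
Variable L : Fn n.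
Variable ginv : 'I_n -> 'I_n -> Fn n.
Hypothesis HU : chart_open U.
Hypothesis HL : smooth_on U L.
Hypothesis Hhom : pos_homog2 U L.
Hypothesis Hg : forall a b, smooth_on U (ginv a b).
Hypothesis Hinv : forall x y, onE U x y -> forall a c,
     sumI (fun b => ginv a b x y * gmet L b c x y) = kdelta a c /\
     sumI (fun b => gmet L a b x y * ginv b c x y) = kdelta a c.
Local Notation Sm := (Sm U).
Local Notation onE := (onE U).
Local Notation N := (Nconn L ginv).
Local Notation Bw := (Berwald L ginv).
Local Notation Dl := (Ddelta L ginv).
Local Notation H := (Ht L ginv).

Lemma Bsym s c b x y : onE x y -> Bw s c b x y = Bw s b c x y.
Proof. move=> hE; exact: (schw_yy HU b c (Sm_spray HU HL Hg s) hE). Qed.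

Lemma Hsym12 a b c x y : onE x y -> H a b c x y = H b a c x y.
Proof.
move=> hE; rewrite !(Ht_formula HU HL Hhom Hg Hinv) //; apply: sumI_ext => s; f_equal.
exact: (schw_yy HU a b (Sm_N HU HL Hg s c) hE).
Qed.

Lemma Hsym23 a b c x y : onE x y -> H a b c x y = H a c b x y.
Proof.
move=> hE; rewrite !(Ht_formula HU HL Hhom Hg Hinv) //; apply: sumI_ext => s; f_equal.
apply: (Dy_loc HU) => // x' y' h'; exact: Bsym.
Qed.

Lemma dg_expand a b c x y :
  Dl c (gmet L a b) x y = H a b c x y +
    sumI (fun s => Bw s c b x y * gmet L a s x y + Bw s c a x y * gmet L b s x y).
Proof. rewrite /Ht; ring. Qed.

Lemma chern_low s b c x y : onE x y ->
  sumI (fun a => gmet L s a x y * Chern L ginv a b c x y) =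
  / 2 * (Dl b (gmet L s c) x y + Dl c (gmet L s b) x y - Dl s (gmet L b c) x y).
Proof.
move=> hE; rewrite /Chern.
transitivity (/ 2 * sumI (fun t => sumI (fun a => gmet L s a x y * ginv a t x y) *
   (Dl b (gmet L t c) x y + Dl c (gmet L t b) x y - Dl t (gmet L b c) x y))).
  transitivity (sumI (fun a => sumI (fun t => / 2 * (gmet L s a x y * ginv a t x y *
   (Dl b (gmet L t c) x y + Dl c (gmet L t b) x y - Dl t (gmet L b c) x y))))).
    apply: sumI_ext => a; rewrite -sumI_scal_l -sumI_scal_l; apply: sumI_ext => t; ring.
  rewrite sumI_swap -sumI_scal_l; apply: sumI_ext => t.
  rewrite -sumI_scal_r -sumI_scal_l; apply: sumI_ext => a; ring.
under sumI_ext => t do rewrite (inv_r Hinv) //.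
by rewrite sumI_kd_l.
Qed.

Lemma LL s b c x y : onE x y ->
  sumI (fun a => gmet L s a x y * Landsberg L ginv a b c x y) = - / 2 * H s b c x y.
Proof.
move=> hE; rewrite /Landsberg.
have -> : sumI (fun a => gmet L s a x y * (Bw a b c x y - Chern L ginv a b c x y)) =
  sumI (fun a => gmet L s a x y * Bw a b c x y) - sumI (fun a => gmet L s a x y * Chern L ginv a b c x y).
  rewrite -sumI_minus; apply: sumI_ext => a; ring.
rewrite chern_low // !dg_expand.
rewrite (Hsym23 s c b hE) (Hsym23 b c s hE) (Hsym12 b s c hE).
have E : sumI (fun t => Bw t b c x y * gmet L s t x y + Bw t b s x y * gmet L c t x y) +
         sumI (fun t => Bw t c b x y * gmet L s t x y + Bw t c s x y * gmet L b t x y) -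
         sumI (fun t => Bw t s c x y * gmet L b t x y + Bw t s b x y * gmet L c t x y) =
         2 * sumI (fun a => gmet L s a x y * Bw a b c x y).
  rewrite -sumI_plus -sumI_minus -sumI_scal_l; apply: sumI_ext => t.
  rewrite (Bsym t c b hE) (Bsym t b s hE) (Bsym t c s hE); ring.
lra.
Qed.

Lemma Land_formula a b c x y : onE x y ->
  Landsberg L ginv a b c x y = - / 2 * sumI (fun t => ginv a t x y * H t b c x y).
Proof.
move=> hE.
rewrite -(sumI_kd_l a (fun s => Landsberg L ginv s b c x y)).
under sumI_ext => s do rewrite -(inv_l Hinv a s hE) -sumI_scal_r.
rewrite sumI_swap -sumI_scal_l; apply: sumI_ext => t.
transitivity (ginv a t x y * (- / 2 * H t b c x y)); last ring.
rewrite -(LL t b c hE) -sumI_scal_l; apply: sumI_ext => s; ring.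
Qed.

Lemma Kid sg x y : onE x y ->
  sumI (fun b => sumI (fun mu => ginv sg b x y * Landsberg L ginv mu b mu x y)) =
  sumI (fun mu => sumI (fun nu => ginv mu nu x y * Landsberg L ginv sg nu mu x y)).
Proof.
move=> hE.
transitivity (sumI (fun b => sumI (fun mu => sumI (fun t =>
   - / 2 * (ginv sg b x y * ginv mu t x y * H b t mu x y))))).
  apply: sumI_ext => b; apply: sumI_ext => mu.
  rewrite Land_formula // -sumI_scal_l -sumI_scal_l; apply: sumI_ext => t.
  rewrite (Hsym12 t b mu hE); ring.
transitivity (sumI (fun mu => sumI (fun t => sumI (fun b =>
   - / 2 * (ginv sg b x y * ginv mu t x y * H b t mu x y))))).
  rewrite sumI_swap; apply: sumI_ext => mu; by rewrite sumI_swap.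
apply: sumI_ext => mu; apply: sumI_ext => t.
rewrite Land_formula // -sumI_scal_l -sumI_scal_l; apply: sumI_ext => b; ring.
Qed.
End Geo5.

Section Fin.
Variable n : nat.
Variable U : ('I_n -> R) -> Prop.
Variable L : Fn n.
Variable ginv : 'I_n -> 'I_n -> Fn n.
Variable f : Fn n.
Hypothesis HU : chart_open U.
Hypothesis HL : smooth_on U L.
Hypothesis Hhom : pos_homog2 U L.
Hypothesis Hg : forall a b, smooth_on U (ginv a b).
Hypothesis Hinv : forall x y, onE U x y -> forall a c,
     sumI (fun b => ginv a b x y * gmet L b c x y) = kdelta a c /\
     sumI (fun b => gmet L a b x y * ginv b c x y) = kdelta a c.
Hypothesis Hf : smooth_on U f.
Local Notation Sm := (Sm U).
Local Notation onE := (onE U).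
Local Notation N := (Nconn L ginv).
Local Notation Bw := (Berwald L ginv).
Local Notation Dl := (Ddelta L ginv).
Local Notation G := (Chern L ginv).

Lemma Dl_gsym c b e x y : onE x y -> Dl c (gmet L e b) x y = Dl c (gmet L b e) x y.
Proof.
move=> hE; rewrite /Ddelta (Dx_loc HU c (G := gmet L b e)) //; last first.
  move=> x' y' h'; exact: (gsymF HU HL).
f_equal; apply: sumI_ext => nu; f_equal.
apply: (Dy_loc HU) => // x' y' h'; exact: (gsymF HU HL).
Qed.

Lemma MC c b e x y : onE x y ->
  Dl c (gmet L b e) x y = sumI (fun s => gmet L b s x y * G s e c x y + gmet L e s x y * G s b c x y).
Proof.
move=> hE; rewrite sumI_plus !(chern_low Hinv) // (Dl_gsym c b e hE); lra.
Qed.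

Lemma CT a nu x y : onE x y ->
  sumI (fun b => sumI (fun e => ginv a b x y *
     sumI (fun s => gmet L b s x y * G s e a x y + gmet L e s x y * G s b a x y) * ginv e nu x y)) =
  sumI (fun e => G a e a x y * ginv e nu x y) + sumI (fun b => ginv a b x y * G nu b a x y).
Proof.
move=> hE.
have E1 : sumI (fun b => sumI (fun e => ginv a b x y * sumI (fun s => gmet L b s x y * G s e a x y) * ginv e nu x y))
   = sumI (fun e => G a e a x y * ginv e nu x y).
  transitivity (sumI (fun e => sumI (fun s => sumI (fun b => ginv a b x y * gmet L b s x y) * G s e a x y) * ginv e nu x y)).
    transitivity (sumI (fun e => sumI (fun b => sumI (fun s => ginv a b x y * gmet L b s x y * G s e a x y * ginv e nu x y)))).
      rewrite sumI_swap; apply: sumI_ext => e; apply: sumI_ext => b.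
      rewrite -sumI_scal_l -sumI_scal_r; apply: sumI_ext => s; ring.
    apply: sumI_ext => e; rewrite sumI_swap -sumI_scal_r; apply: sumI_ext => s.
    rewrite -sumI_scal_r -sumI_scal_r; apply: sumI_ext => b; ring.
  apply: sumI_ext => e; under sumI_ext => s do rewrite (inv_l Hinv) //.
  by rewrite sumI_kd_l.
have E2 : sumI (fun b => sumI (fun e => ginv a b x y * sumI (fun s => gmet L e s x y * G s b a x y) * ginv e nu x y))
   = sumI (fun b => ginv a b x y * G nu b a x y).
  apply: sumI_ext => b.
  transitivity (ginv a b x y * sumI (fun s => G s b a x y * sumI (fun e => gmet L s e x y * ginv e nu x y))).
    transitivity (ginv a b x y * sumI (fun e => sumI (fun s => G s b a x y * (gmet L s e x y * ginv e nu x y)))).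
      rewrite -sumI_scal_l; apply: sumI_ext => e; rewrite -sumI_scal_l -sumI_scal_l -sumI_scal_r.
      apply: sumI_ext => s; rewrite (gsym HU HL s e hE); ring.
    f_equal; rewrite sumI_swap; apply: sumI_ext => s; by rewrite sumI_scal_l.
  f_equal; under sumI_ext => s do rewrite (inv_r Hinv) //.
  by rewrite sumI_kd_r.
rewrite -E1 -E2 -sumI_plus; apply: sumI_ext => b; rewrite -sumI_plus; apply: sumI_ext => e.
rewrite sumI_plus; ring.
Qed.

Let Sm_gf a nu : Sm (fun x y => ginv a nu x y * Dy nu f x y).
Proof. apply: (Sm_mul HU (Hg a nu)); exact: Sm_Dy. Qed.

Lemma DA a x y : onE x y ->
  Dl a (gradV ginv f a) x y =
  sumI (fun nu => - (sumI (fun e => G a e a x y * ginv e nu x y) + sumI (fun b => ginv a b x y * G nu b a x y))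
                  * Dy nu f x y + ginv a nu x y * Dl a (Dy nu f) x y).
Proof.
move=> hE.
rewrite /gradV (Ddelta_sumI (U := U) L ginv a (F := fun nu x y => ginv a nu x y * Dy nu f x y)) //.
apply: sumI_ext => nu.
rewrite (Ddelta_mul (U := U)) //; last exact: Sm_Dy.
rewrite (Ddelta_ginv HU HL Hg Hinv) //.
have -> : sumI (fun b => sumI (fun e => ginv a b x y * Dl a (gmet L b e) x y * ginv e nu x y)) =
  sumI (fun b => sumI (fun e => ginv a b x y *
     sumI (fun s => gmet L b s x y * G s e a x y + gmet L e s x y * G s b a x y) * ginv e nu x y)).
  apply: sumI_ext => b; apply: sumI_ext => e; rewrite MC //.
rewrite CT //. all: try exact: Hg. all: try exact: Sm_gf.
Qed.

Lemma part1 x y : onE x y ->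
  divHC L ginv (gradV ginv f) x y =
  sumI (fun mu => sumI (fun nu => ginv mu nu x y *
        (Dl mu (Dy nu f) x y - sumI (fun a => G a nu mu x y * Dy a f x y)))).
Proof.
move=> hE; rewrite /divHC; apply: sumI_ext => a.
rewrite DA //.
have Q1 : sumI (fun nu => sumI (fun e => G a e a x y * ginv e nu x y) * Dy nu f x y) =
          sumI (fun mu => G a mu a x y * gradV ginv f mu x y).
  rewrite /gradV.
  under sumI_ext => nu do rewrite -sumI_scal_r.
  rewrite sumI_swap; apply: sumI_ext => e; rewrite -sumI_scal_l; apply: sumI_ext => nu; ring.
have Q2 : sumI (fun nu => sumI (fun b => ginv a b x y * G nu b a x y) * Dy nu f x y) =
          sumI (fun nu => ginv a nu x y * sumI (fun al => G al nu a x y * Dy al f x y)).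
  under sumI_ext => nu do rewrite -sumI_scal_r.
  rewrite sumI_swap; apply: sumI_ext => b; rewrite -sumI_scal_l; apply: sumI_ext => nu; ring.
have E : sumI (fun nu => - (sumI (fun e => G a e a x y * ginv e nu x y) + sumI (fun b => ginv a b x y * G nu b a x y))
                  * Dy nu f x y + ginv a nu x y * Dl a (Dy nu f) x y) =
   sumI (fun nu => ginv a nu x y * Dl a (Dy nu f) x y)
   - sumI (fun nu => sumI (fun e => G a e a x y * ginv e nu x y) * Dy nu f x y)
   - sumI (fun nu => sumI (fun b => ginv a b x y * G nu b a x y) * Dy nu f x y).
  rewrite -!sumI_minus; apply: sumI_ext => nu; ring.
rewrite E Q1 Q2.
have E2 : sumI (fun nu => ginv a nu x y * (Dl a (Dy nu f) x y - sumI (fun al => G al nu a x y * Dy al f x y))) =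
  sumI (fun nu => ginv a nu x y * Dl a (Dy nu f) x y) -
  sumI (fun nu => ginv a nu x y * sumI (fun al => G al nu a x y * Dy al f x y)).
  rewrite -sumI_minus; apply: sumI_ext => nu; ring.
rewrite E2; ring.
Qed.

Let SmDf mu : Sm (Dl mu f) := Sm_Ddelta HU HL Hg mu Hf.

Lemma S2 nu mu x y : onE x y ->
  Dy nu (Dl mu f) x y = Dl mu (Dy nu f) x y - sumI (fun s => Bw s mu nu x y * Dy s f x y).
Proof.
move=> hE; rewrite /Ddelta.
rewrite (Dy_minus (U := U) nu (F := Dx mu f) (G := fun x y => sumI (fun s => N s mu x y * Dy s f x y))) //;
  last first.
- apply: (Sm_sumI HU (F := fun s x y => N s mu x y * Dy s f x y)) => s.
  apply: (Sm_mul HU (Sm_N HU HL Hg s mu)); exact: Sm_Dy.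
- exact: Sm_Dx.
rewrite (Dy_sumI (U := U) nu (F := fun s x y => N s mu x y * Dy s f x y)) //; last first.
  move=> s; apply: (Sm_mul HU (Sm_N HU HL Hg s mu)); exact: Sm_Dy.
rewrite (schw_yx HU nu mu Hf hE).
have -> : sumI (fun s => Dy nu (fun x y => N s mu x y * Dy s f x y) x y) =
  sumI (fun s => Bw s mu nu x y * Dy s f x y) + sumI (fun s => N s mu x y * Dy s (Dy nu f) x y).
  rewrite -sumI_plus; apply: sumI_ext => s.
  rewrite (Dy_mul (U := U) nu (Sm_N HU HL Hg s mu)) //; last exact: Sm_Dy.
  rewrite (schw_yy HU nu s Hf hE); by [].
ring.
Qed.

Lemma S3 mu x y : onE x y ->
  sumI (fun nu => Dy nu (ginv nu mu) x y) = - 2 * Iup L ginv mu x y.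
Proof.
move=> hE.
under sumI_ext => nu do rewrite (dginv_y HU HL Hg Hinv) //.
rewrite sumI_opp.
have -> : sumI (fun nu => sumI (fun b => sumI (fun e => ginv nu b x y * Dy nu (gmet L b e) x y * ginv e mu x y))) =
  sumI (fun e => (2 * Ilow L ginv e x y) * ginv e mu x y).
  transitivity (sumI (fun e => sumI (fun nu => sumI (fun b => ginv nu b x y * Dy nu (gmet L b e) x y)) * ginv e mu x y)).
    transitivity (sumI (fun nu => sumI (fun e => sumI (fun b => ginv nu b x y * Dy nu (gmet L b e) x y * ginv e mu x y)))).
      apply: sumI_ext => nu; by rewrite sumI_swap.
    rewrite sumI_swap; apply: sumI_ext => e; rewrite -sumI_scal_r; apply: sumI_ext => nu.
    by rewrite -sumI_scal_r.
  apply: sumI_ext => e; f_equal.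
  rewrite /Ilow /Cartan -sumI_scal_l; apply: sumI_ext => nu; rewrite -sumI_scal_l; apply: sumI_ext => b; field.
rewrite /Iup.
have -> : sumI (fun e => 2 * Ilow L ginv e x y * ginv e mu x y) =
  2 * sumI (fun nu => ginv mu nu x y * Ilow L ginv nu x y).
  rewrite -sumI_scal_l; apply: sumI_ext => e; rewrite (gisym HU HL Hinv e mu hE); ring.
ring.
Qed.

Lemma part2 x y : onE x y ->
  sumI (fun nu => Dy nu (fun x' y' =>
              sumI (fun mu => ginv nu mu x' y' * Dl mu f x' y')) x y)
      + 2 * sumI (fun mu => Iup L ginv mu x y * Dl mu f x y)
      + sumI (fun a => Jup L ginv a x y * Dy a f x y) =
  sumI (fun mu => sumI (fun nu => ginv mu nu x y *
        (Dl mu (Dy nu f) x y - sumI (fun a => G a nu mu x y * Dy a f x y)))).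
Proof.
move=> hE.
have S1 : forall nu, Dy nu (fun x' y' => sumI (fun mu => ginv nu mu x' y' * Dl mu f x' y')) x y =
   sumI (fun mu => Dy nu (ginv nu mu) x y * Dl mu f x y) +
   sumI (fun mu => ginv nu mu x y * Dl mu (Dy nu f) x y) -
   sumI (fun mu => ginv nu mu x y * sumI (fun s => Bw s mu nu x y * Dy s f x y)).
  move=> nu.
  rewrite (Dy_sumI (U := U) nu (F := fun mu x y => ginv nu mu x y * Dl mu f x y)) //; last first.
    move=> mu; exact: (Sm_mul HU (Hg nu mu) (SmDf mu)).
  rewrite -sumI_plus -sumI_minus; apply: sumI_ext => mu.
  rewrite (Dy_mul (U := U) nu (Hg nu mu) (SmDf mu)) // S2 //; ring.
rewrite (sumI_ext S1) !sumI_minus !sumI_plus.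
set A := sumI (fun nu => sumI (fun mu => Dy nu (ginv nu mu) x y * Dl mu f x y)).
set B := sumI (fun nu => sumI (fun mu => ginv nu mu x y * Dl mu (Dy nu f) x y)).
set C := sumI (fun nu => sumI (fun mu => ginv nu mu x y * sumI (fun s => Bw s mu nu x y * Dy s f x y))).
have HA : A = - 2 * sumI (fun mu => Iup L ginv mu x y * Dl mu f x y).
  rewrite /A sumI_swap.
  under sumI_ext => mu do rewrite sumI_scal_r S3 //.
  rewrite -sumI_scal_l; apply: sumI_ext => mu; ring.
have HB : B = sumI (fun mu => sumI (fun nu => ginv mu nu x y * Dl mu (Dy nu f) x y)).
  rewrite /B sumI_swap; apply: sumI_ext => mu; apply: sumI_ext => nu.
  by rewrite (gisym HU HL Hinv nu mu hE).
have HC : C = sumI (fun a => sumI (fun mu => sumI (fun nu => ginv mu nu x y * Bw a nu mu x y * Dy a f x y))).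
  rewrite /C.
  transitivity (sumI (fun nu => sumI (fun mu => sumI (fun s => ginv mu nu x y * Bw s nu mu x y * Dy s f x y)))).
    rewrite sumI_swap; apply: sumI_ext => mu; apply: sumI_ext => nu.
    rewrite -sumI_scal_l (gisym HU HL Hinv nu mu hE); apply: sumI_ext => s; ring.
  rewrite sumI_swap; under sumI_ext => mu do rewrite sumI_swap.
  by rewrite sumI_swap.
have HJ : sumI (fun a => Jup L ginv a x y * Dy a f x y) =
   sumI (fun a => sumI (fun mu => sumI (fun nu => ginv mu nu x y * Bw a nu mu x y * Dy a f x y))) -
   sumI (fun a => sumI (fun mu => sumI (fun nu => ginv mu nu x y * G a nu mu x y * Dy a f x y))).
  rewrite -sumI_minus; apply: sumI_ext => a.
  have -> : Jup L ginv a x y = sumI (fun mu => sumI (fun nu => ginv mu nu x y * Landsberg L ginv a nu mu x y)).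
    rewrite -(Kid HU HL Hhom Hg Hinv a hE) /Jup /Jlow; apply: sumI_ext => b; by rewrite sumI_scal_l.
  rewrite -sumI_scal_r -sumI_minus; apply: sumI_ext => mu.
  rewrite -sumI_scal_r -sumI_minus; apply: sumI_ext => nu.
  rewrite /Landsberg; ring.
have HD : sumI (fun mu => sumI (fun nu => ginv mu nu x y *
        (Dl mu (Dy nu f) x y - sumI (fun a => G a nu mu x y * Dy a f x y)))) =
   sumI (fun mu => sumI (fun nu => ginv mu nu x y * Dl mu (Dy nu f) x y)) -
   sumI (fun a => sumI (fun mu => sumI (fun nu => ginv mu nu x y * G a nu mu x y * Dy a f x y))).
  transitivity (sumI (fun mu => sumI (fun nu => ginv mu nu x y * Dl mu (Dy nu f) x y)) -
     sumI (fun mu => sumI (fun nu => sumI (fun a => ginv mu nu x y * G a nu mu x y * Dy a f x y)))).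
    rewrite -sumI_minus; apply: sumI_ext => mu; rewrite -sumI_minus; apply: sumI_ext => nu.
    rewrite Rmult_minus_distr_l -sumI_scal_l; f_equal; apply: sumI_ext => a; ring.
  f_equal; symmetry; rewrite sumI_swap; apply: sumI_ext => mu; by rewrite sumI_swap.
rewrite HA HB HC HJ HD; ring.
Qed.
End Fin.

Unset Implicit Arguments.

Theorem mainTheorem7 (n : nat) (U : ('I_n -> R) -> Prop) (L : Fn n)
    (ginv : 'I_n -> 'I_n -> Fn n) (f : Fn n) :
  chart_open U ->
  smooth_on U L ->
  pos_homog2 U L ->
  (forall a b, smooth_on U (ginv a b)) ->
  (forall x y, onE U x y -> forall a c,
     sumI (fun b => ginv a b x y * gmet L b c x y) = kdelta a c /\
     sumI (fun b => gmet L a b x y * ginv b c x y) = kdelta a c) ->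
  smooth_on U f ->
  forall x y, onE U x y ->
    divHC L ginv (gradV ginv f) x y =
      sumI (fun mu => sumI (fun nu => ginv mu nu x y *
        (Ddelta L ginv mu (Dy nu f) x y
         - sumI (fun a => Chern L ginv a nu mu x y * Dy a f x y)))) /\
    divHC L ginv (gradV ginv f) x y =
      sumI (fun nu => Dy nu (fun x' y' =>
              sumI (fun mu => ginv nu mu x' y' * Ddelta L ginv mu f x' y')) x y)
      + 2 * sumI (fun mu => Iup L ginv mu x y * Ddelta L ginv mu f x y)
      + sumI (fun a => Jup L ginv a x y * Dy a f x y).
Proof.
move=> HU HL Hhom Hg Hinv Hf x y hE; split.
  exact: (part1 HU HL Hg Hinv Hf hE).
rewrite (part1 HU HL Hg Hinv Hf hE) (part2 HU HL Hhom Hg Hinv Hf hE) //.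
Qed.
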